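(* Let $\mathsf{CL}'$ be the calculus $\mathsf{CL}$ in which the rule L$>$ is replaced by L$>^\star$ and the rule Mon$\forall$ is added. For every formula $A_0$ and world label $x_0$, root-first proof search for a $\mathsf{CL}'$-derivation of $\Rightarrow x_0:A_0$ built in accordance with the proof search strategy terminates in a finite number of steps, every branch ending with either an initial sequent or a saturated sequent.
   Context: Syntax: world labels, neighbourhood labels; relational atoms $a\in N(x)$, $x\in a$, $a\subseteq b$; labelled formulas: these, $x:A$, $a\Vdash^\exists A$, $a\Vdash^\forall A$, $x\Vdash_aA|B$, for $A,B\in\mathcal{L}::=p\mid\bot\mid A\wedge B\mid A\lor B\mid A\to B\mid A>B$. Sequents: multisets, relational atoms only on the left. Rules of $\mathsf{CL}'$ (premisses / conclusion; ''fresh'': label not in conclusion): initial sequents $x:p,\Gamma\Rightarrow\Delta,x:p$ ($p$ atomic), $x:\bot,\Gamma\Rightarrow\Delta$; G3 rules for $\wedge,\vee,\to$ on $x:A$; L$\forall$: $x:A,x\in a,a\Vdash^\forall A,\Gamma\Rightarrow\Delta$ / $x\in a,a\Vdash^\forall A,\Gamma\Rightarrow\Delta$; R$\forall$ (x fresh): $x\in a,\Gamma\Rightarrow\Delta,x:A$ / $\Gamma\Rightarrow\Delta,a\Vdash^\forall A$; L$\exists$ (x fresh): $x\in a,x:A,\Gamma\Rightarrow\Delta$ / $a\Vdash^\exists A,\Gamma\Rightarrow\Delta$; R$\exists$: $x\in a,\Gamma\Rightarrow\Delta,x:A,a\Vdash^\exists A$ / $x\in a,\Gamma\Rightarrow\Delta,a\Vdash^\exists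 A$; R$>$ (a fresh): $a\in N(x),a\Vdash^\exists A,\Gamma\Rightarrow\Delta,x\Vdash_aA|B$ / $\Gamma\Rightarrow\Delta,x:A>B$; L$>^\star$: $a\in N(x),x:A>B,\Gamma\Rightarrow\Delta,a\Vdash^\exists A$ and $a\Vdash^\exists A,x\Vdash_aA|B,a\in N(x),x:A>B,\Gamma\Rightarrow\Delta$ / $a\in N(x),x:A>B,\Gamma\Rightarrow\Delta$; R$|$: $c\in N(x),c\subseteq a,\Gamma\Rightarrow\Delta,x\Vdash_aA|B,c\Vdash^\exists A$ and $c\in N(x),c\subseteq a,\Gamma\Rightarrow\Delta,x\Vdash_aA|B,c\Vdash^\forall A\to B$ / $c\in N(x),c\subseteq a,\Gamma\Rightarrow\Delta,x\Vdash_aA|B$; L$|$ (c fresh): $c\in N(x),c\subseteq a,c\Vdash^\exists A,c\Vdash^\forall A\to B,\Gamma\Rightarrow\Delta$ / $x\Vdash_aA|B,\Gamma\Rightarrow\Delta$; Ref: $a\subseteq a,\Gamma\Rightarrow\Delta$ / $\Gamma\Rightarrow\Delta$; Tr: $c\subseteq a,c\subseteq b,b\subseteq a,\Gamma\Rightarrow\Delta$ / $c\subseteq b,b\subseteq a,\Gamma\Rightarrow\Delta$; L$\subseteq$: $x\in a,a\subseteq b,x\in b,\Gamma\Rightarrow\Delta$ / $x\in a,a\subseteq b,\Gamma\Rightarrow\Delta$; Mon$\forall$: $b\subseteq a,b\Vdash^\forall A,a\Vdash^\forall A,\Gamma\Rightarrow\Delta$ / $b\subseteq a,a\Vdash^\forall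 A,\Gamma\Rightarrow\Delta$. For a branch $S_0,S_1,\dots$ with $S_0={}\Rightarrow x_0:A_0$ and $S_k=\Gamma_k\Rightarrow\Delta_k$, write $\downarrow\Gamma_k$ ($\downarrow\Delta_k$) for the union of the antecedents (succedents) of $S_0,\dots,S_k$. Saturation conditions for $\Gamma\Rightarrow\Delta=S_k$ (with $\downarrow\Gamma,\downarrow\Delta$ the corresponding unions): L$\wedge$: $x:A\wedge B\in\downarrow\Gamma$ implies $x:A,x:B\in\downarrow\Gamma$; R$\wedge$: $x:A\wedge B\in\downarrow\Delta$ implies $x:A$ or $x:B$ in $\downarrow\Delta$; L$\vee$: $x:A\vee B\in\downarrow\Gamma$ implies $x:A$ or $x:B$ in $\downarrow\Gamma$; R$\vee$: $x:A\vee B\in\downarrow\Delta$ implies $x:A,x:B\in\downarrow\Delta$; L$\to$: $x:A\to B\in\downarrow\Gamma$ implies $x:B\in\downarrow\Gamma$ or $x:A\in\downarrow\Delta$; R$\to$: $x:A\to B\in\Delta$ implies $x:A\in\downarrow\Gamma$ and $x:B\in\downarrow\Delta$; Ref: if $a$ occurs in $\Gamma\cup\Delta$ then $a\subseteq a\in\Gamma$; Tr: $a\subseteq b,b\subseteq c\in\Gamma$ implies $a\subseteq c\in\Gamma$; L$\subseteq$: $x\in a,a\subseteq b\in\Gamma$ implies $x\in b\in\Gamma$; L$\forall$: $x\in a,a\Vdash^\forall A\in\Gamma$ implies $x:A\in\downarrow\Gamma$; R$\forall$: $a\Vdash^\forall A\in\downarrow\Delta$ implies for some $x$, $x\in a\in\Gamma$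 and $x:A\in\downarrow\Delta$; L$\exists$: $a\Vdash^\exists A\in\downarrow\Gamma$ implies for some $x$, $x\in a\in\Gamma$ and $x:A\in\downarrow\Gamma$; R$\exists$: $x\in a\in\Gamma$ and $a\Vdash^\exists A\in\Delta$ imply $x:A\in\downarrow\Delta$; R$>$: $x:A>B\in\downarrow\Delta$ implies for some $a$, $a\in N(x)\in\Gamma$, $a\Vdash^\exists A\in\downarrow\Gamma$, $x\Vdash_aA|B\in\Delta$; L$>^\star$: $a\in N(x),x:A>B\in\Gamma$ imply $a\Vdash^\exists A\in\downarrow\Delta$, or both $a\Vdash^\exists A$ and $x\Vdash_aA|B$ in $\downarrow\Gamma$; R$|$: $c\in N(x),c\subseteq a\in\Gamma$ and $x\Vdash_aA|B\in\Delta$ imply $c\Vdash^\exists A\in\Delta$ or $c\Vdash^\forall A\to B\in\downarrow\Delta$; L$|$: $x\Vdash_aA|B\in\downarrow\Gamma$ implies for some $c$, $c\in N(x),c\subseteq a\in\Gamma$, $c\Vdash^\exists A\in\downarrow\Gamma$ and $c\Vdash^\forall A\to B\in\Gamma$; Mon$\forall$: $b\subseteq a,a\Vdash^\forall A\in\Gamma$ imply $b\Vdash^\forall A\in\Gamma$. A sequent is saturated if no $x:p$ is in $\Gamma\cap\Delta$, no $x:\bot$ is in $\Gamma$, and it satisfies all these saturation conditions. Proof search strategy: (1) rules introducing a new label (R$\forall$, L$\exists$, R$>$, L$|$: dynamic rules) are applied only if no other (static) rule is applicable, except that R$>$ is applied before L$>^\star$; (2) a rule is not applied to a sequent that satisfies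 the saturation condition associated with that rule. *)

(* Defs.v *)
From Stdlib Require Import List Permutation.
Import ListNotations.

Inductive formula : Type :=
  | Atm (p : nat)
  | Bot
  | And (A B : formula)
  | Or  (A B : formula)
  | Imp (A B : formula)
  | Cnd (A B : formula).           (* A > B *)

(* World labels and neighbourhood labels are both represented by nat; the
   sort of a label is determined by its position in the labelled formula. *)
Definition wlabel := nat.
Definition nlabel := nat.

Inductive lform : Type :=
  | InN  (a : nlabel) (x : wlabel)                 (* a ∈ N(x)      *)
  | Mem  (x : wlabel) (a : nlabel)                 (* x ∈ a         *)
  | Sub  (a b : nlabel)                            (* a ⊆ b         *)
  | Lab  (x : wlabel) (A : formula)                (* x : A         *)
  | FEx  (a : nlabel) (A : formula)                (* a ⊩∃ A        *)
  | FAll (a : nlabel) (A : formula)                (* a ⊩∀ A        *)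
  | FCnd (x : wlabel) (a : nlabel) (A B : formula). (* x ⊩_a A | B  *)

Definition wlabs (f : lform) : list wlabel :=
  match f with
  | InN _ x => [x] | Mem x _ => [x] | Sub _ _ => []
  | Lab x _ => [x] | FEx _ _ => [] | FAll _ _ => [] | FCnd x _ _ _ => [x]
  end.
Definition nlabs (f : lform) : list nlabel :=
  match f with
  | InN a _ => [a] | Mem _ a => [a] | Sub a b => [a; b]
  | Lab _ _ => [] | FEx a _ => [a] | FAll a _ => [a] | FCnd _ a _ _ => [a]
  end.

(* Sequents Γ ⇒ Δ; Γ and Δ are multisets, represented by lists up to
   permutation. *)
Definition sequent : Type := (list lform * list lform)%type.

Definition occW (x : wlabel) (G D : list lform) : Prop :=
  exists f, (In f G \/ In f D) /\ In x (wlabs f).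
Definition occN (a : nlabel) (G D : list lform) : Prop :=
  exists f, (In f G \/ In f D) /\ In a (nlabs f).

Definition initial (S : sequent) : Prop :=
  (exists x p, In (Lab x (Atm p)) (fst S) /\ In (Lab x (Atm p)) (snd S))
  \/ (exists x, In (Lab x Bot) (fst S)).

(* ↓Γ and ↓Δ: the current sequent is (G, D), H is the list of the earlier
   sequents S_0, ..., S_{k-1} of the branch (in any order). *)
Definition dA (H : list sequent) (G : list lform) (f : lform) : Prop :=
  In f G \/ exists S, In S H /\ In f (fst S).
Definition dS (H : list sequent) (D : list lform) (f : lform) : Prop :=
  In f D \/ exists S, In S H /\ In f (snd S).

Section SatConditions.
Variables (H : list sequent) (G D : list lform).

Definition sLand x A B := dA H G (Lab x (And A B)) -> dA H G (Lab x A) /\ dA H G (Lab x B).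
Definition sRand x A B := dS H D (Lab x (And A B)) -> dS H D (Lab x A) \/ dS H D (Lab x B).
Definition sLor  x A B := dA H G (Lab x (Or A B)) -> dA H G (Lab x A) \/ dA H G (Lab x B).
Definition sRor  x A B := dS H D (Lab x (Or A B)) -> dS H D (Lab x A) /\ dS H D (Lab x B).
Definition sLimp x A B := dA H G (Lab x (Imp A B)) -> dA H G (Lab x B) \/ dS H D (Lab x A).
Definition sRimp x A B := In (Lab x (Imp A B)) D -> dA H G (Lab x A) /\ dS H D (Lab x B).
Definition sRef (a : nlabel) := occN a G D -> In (Sub a a) G.
Definition sTr (a b c : nlabel) := In (Sub a b) G -> In (Sub b c) G -> In (Sub a c) G.
Definition sLsub x a b := In (Mem x a) G -> In (Sub a b) G -> In (Mem x b) G.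
Definition sLall x a A := In (Mem x a) G -> In (FAll a A) G -> dA H G (Lab x A).
Definition sRall a A :=
  dS H D (FAll a A) -> exists x, In (Mem x a) G /\ dS H D (Lab x A).
Definition sLex a A :=
  dA H G (FEx a A) -> exists x, In (Mem x a) G /\ dA H G (Lab x A).
Definition sRex x a A := In (Mem x a) G -> In (FEx a A) D -> dS H D (Lab x A).
Definition sRcnd x A B :=
  dS H D (Lab x (Cnd A B)) ->
  exists a, In (InN a x) G /\ dA H G (FEx a A) /\ In (FCnd x a A B) D.
Definition sLcnd a x A B :=
  In (InN a x) G -> In (Lab x (Cnd A B)) G ->
  dS H D (FEx a A) \/ (dA H G (FEx a A) /\ dA H G (FCnd x a A B)).
Definition sRbar c x a A B :=
  In (InN c x) G -> In (Sub c a) G -> In (FCnd x a A B) D ->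
  In (FEx c A) D \/ dS H D (FAll c (Imp A B)).
Definition sLbar x a A B :=
  dA H G (FCnd x a A B) ->
  exists c, In (InN c x) G /\ In (Sub c a) G /\ dA H G (FEx c A)
            /\ In (FAll c (Imp A B)) G.
Definition sMon b a A := In (Sub b a) G -> In (FAll a A) G -> In (FAll b A) G.

Definition saturated : Prop :=
  (~ exists x p, In (Lab x (Atm p)) G /\ In (Lab x (Atm p)) D) /\
  (~ exists x, In (Lab x Bot) G) /\
  (forall x A B, sLand x A B) /\ (forall x A B, sRand x A B) /\
  (forall x A B, sLor x A B) /\ (forall x A B, sRor x A B) /\
  (forall x A B, sLimp x A B) /\ (forall x A B, sRimp x A B) /\
  (forall a, sRef a) /\ (forall a b c, sTr a b c) /\
  (forall x a b, sLsub x a b) /\ (forall x a A, sLall x a A) /\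
  (forall a A, sRall a A) /\ (forall a A, sLex a A) /\
  (forall x a A, sRex x a A) /\ (forall x A B, sRcnd x A B) /\
  (forall a x A B, sLcnd a x A B) /\ (forall c x a A B, sRbar c x a A B) /\
  (forall x a A B, sLbar x a A B) /\ (forall b a A, sMon b a A).
End SatConditions.

Inductive rule : Type :=
  | RLand | RRand | RLor | RRor | RLimp | RRimp
  | RLall | RRall | RLex | RRex | RRcnd | RLcnd | RRbar | RLbar
  | RRef | RTr | RLsub | RMon.

(* dynamic rules: those introducing a new label *)
Definition dynamic (r : rule) : Prop :=
  r = RRall \/ r = RLex \/ r = RRcnd \/ r = RLbar.

(* rapp H G D r Q : rule r can be applied, root-first, to the conclusion
   (G, D) (whose branch history is H) with premisses Q, and the application
   is not excluded by clause (2) of the strategy, i.e. (G, D) does not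
   satisfy the saturation condition associated with this application. *)
Inductive rapp (H : list sequent) (G D : list lform) : rule -> list sequent -> Prop :=
  | ap_Land x A B ctx : Permutation G (Lab x (And A B) :: ctx) ->
      ~ sLand H G x A B ->
      rapp H G D RLand [(Lab x A :: Lab x B :: ctx, D)]
  | ap_Rand x A B ctx : Permutation D (Lab x (And A B) :: ctx) ->
      ~ sRand H D x A B ->
      rapp H G D RRand [(G, Lab x A :: ctx); (G, Lab x B :: ctx)]
  | ap_Lor x A B ctx : Permutation G (Lab x (Or A B) :: ctx) ->
      ~ sLor H G x A B ->
      rapp H G D RLor [(Lab x A :: ctx, D); (Lab x B :: ctx, D)]
  | ap_Ror x A B ctx : Permutation D (Lab x (Or A B) :: ctx) ->
      ~ sRor H D x A B ->
      rapp H G D RRor [(G, Lab x A :: Lab x B :: ctx)]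
  | ap_Limp x A B ctx : Permutation G (Lab x (Imp A B) :: ctx) ->
      ~ sLimp H G D x A B ->
      rapp H G D RLimp [(ctx, Lab x A :: D); (Lab x B :: ctx, D)]
  | ap_Rimp x A B ctx : Permutation D (Lab x (Imp A B) :: ctx) ->
      ~ sRimp H G D x A B ->
      rapp H G D RRimp [(Lab x A :: G, Lab x B :: ctx)]
  | ap_Lall x a A : In (Mem x a) G -> In (FAll a A) G ->
      ~ sLall H G x a A ->
      rapp H G D RLall [(Lab x A :: G, D)]
  | ap_Rall a A x ctx : Permutation D (FAll a A :: ctx) -> ~ occW x G D ->
      ~ sRall H G D a A ->
      rapp H G D RRall [(Mem x a :: G, Lab x A :: ctx)]
  | ap_Lex a A x ctx : Permutation G (FEx a A :: ctx) -> ~ occW x G D ->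
      ~ sLex H G a A ->
      rapp H G D RLex [(Mem x a :: Lab x A :: ctx, D)]
  | ap_Rex x a A : In (Mem x a) G -> In (FEx a A) D ->
      ~ sRex H G D x a A ->
      rapp H G D RRex [(G, Lab x A :: D)]
  | ap_Rcnd x A B a ctx : Permutation D (Lab x (Cnd A B) :: ctx) -> ~ occN a G D ->
      ~ sRcnd H G D x A B ->
      rapp H G D RRcnd [(InN a x :: FEx a A :: G, FCnd x a A B :: ctx)]
  | ap_Lcnd a x A B : In (InN a x) G -> In (Lab x (Cnd A B)) G ->
      ~ sLcnd H G D a x A B ->
      rapp H G D RLcnd [(G, FEx a A :: D);
                        (FEx a A :: FCnd x a A B :: G, D)]
  | ap_Rbar c x a A B : In (InN c x) G -> In (Sub c a) G -> In (FCnd x a A B) D ->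
      ~ sRbar H G D c x a A B ->
      rapp H G D RRbar [(G, FEx c A :: D); (G, FAll c (Imp A B) :: D)]
  | ap_Lbar x a A B c ctx : Permutation G (FCnd x a A B :: ctx) -> ~ occN c G D ->
      ~ sLbar H G x a A B ->
      rapp H G D RLbar
        [(InN c x :: Sub c a :: FEx c A :: FAll c (Imp A B) :: ctx, D)]
  | ap_Ref a : ~ sRef G D a ->
      rapp H G D RRef [(Sub a a :: G, D)]
  | ap_Tr a b c : In (Sub a b) G -> In (Sub b c) G ->
      ~ sTr G a b c ->
      rapp H G D RTr [(Sub a c :: G, D)]
  | ap_Lsub x a b : In (Mem x a) G -> In (Sub a b) G ->
      ~ sLsub G x a b ->
      rapp H G D RLsub [(Mem x b :: G, D)]
  | ap_Mon b a A : In (Sub b a) G -> In (FAll a A) G ->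
      ~ sMon G b a A ->
      rapp H G D RMon [(FAll b A :: G, D)].

Definition seq_perm (S T : sequent) : Prop :=
  Permutation (fst S) (fst T) /\ Permutation (snd S) (snd T).

Definition app (H : list sequent) (S : sequent) (r : rule) (P : list sequent) : Prop :=
  exists Q, rapp H (fst S) (snd S) r Q /\ Forall2 seq_perm P Q.

Definition applicable (H : list sequent) (S : sequent) (r : rule) : Prop :=
  exists P, app H S r P.

(* Clause (1) of the strategy: dynamic rules are applied only if no static
   rule is applicable, except that R> is applied before L>* (R> only waits
   for static rules other than L>*, and L>* waits for R>). *)
Definition priority_ok (H : list sequent) (S : sequent) (r : rule) : Prop :=
  match r with
  | RRall | RLex | RLbar =>
      forall r', ~ dynamic r' -> ~ applicable H S r'
  | RRcnd =>
      forall r', ~ dynamic r' -> r' <> RLcnd -> ~ applicable H S r'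
  | RLcnd => ~ applicable H S RRcnd
  | _ => True
  end.

(* A branch is a list of sequents S_k :: ... :: S_0 (current one first). *)
Definition sstep (B : list sequent) (S' : sequent) : Prop :=
  match B with
  | [] => False
  | S0 :: H => ~ initial S0 /\
      exists r P, app H S0 r P /\ priority_ok H S0 r /\ In S' P
  end.

Definition root (x0 : wlabel) (A0 : formula) : sequent := ([], [Lab x0 A0]).

Inductive branch (S0 : sequent) : list sequent -> Prop :=
  | br_root : branch S0 [S0]
  | br_ext B S' : branch S0 B -> sstep B S' -> branch S0 (S' :: B).

Definition extends (B' B : list sequent) : Prop :=
  exists S', B' = S' :: B /\ sstep B S'.

Definition branch_saturated (B : list sequent) : Prop :=
  match B with
  | [] => False
  | (G, D) :: H => saturated H G D
  end.

(* Main.v *)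
Require Import Defs.
From Stdlib Require Import List Permutation Arith Lia Classical.
Import ListNotations.

Fixpoint cd (F : formula) : nat :=
  match F with
  | Atm _ | Bot => 0
  | And A B | Or A B | Imp A B => Nat.max (cd A) (cd B)
  | Cnd A B => S (Nat.max (cd A) (cd B))
  end.

Fixpoint sc (F : formula) : list formula :=
  match F with
  | Atm _ | Bot => [F]
  | And A B | Or A B | Imp A B => F :: sc A ++ sc B
  | Cnd A B => F :: Imp A B :: sc A ++ sc B
  end.

Lemma sc_self F : In F (sc F).
Proof. destruct F; simpl; auto. Qed.

Lemma sc_trans F G : In G (sc F) -> incl (sc G) (sc F).
Proof.
  induction F; simpl; intros Hin; intros y Hy.
  - destruct Hin as [<-|[]]; exact Hy.
  - destruct Hin as [<-|[]]; exact Hy.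
  - destruct Hin as [<-|Hin]; [exact Hy|]. right. apply in_app_iff in Hin as [Hin|Hin];
      apply in_app_iff; [left; apply IHF1|right; apply IHF2]; auto.
  - destruct Hin as [<-|Hin]; [exact Hy|]. right. apply in_app_iff in Hin as [Hin|Hin];
      apply in_app_iff; [left; apply IHF1|right; apply IHF2]; auto.
  - destruct Hin as [<-|Hin]; [exact Hy|]. right. apply in_app_iff in Hin as [Hin|Hin];
      apply in_app_iff; [left; apply IHF1|right; apply IHF2]; auto.
  - destruct Hin as [<-|[<-|Hin]]; [exact Hy| |].
    + simpl in Hy. destruct Hy as [<-|Hy]; [right; left; auto|]. right; right; exact Hy.
    + right; right. apply in_app_iff in Hin as [Hin|Hin];
      apply in_app_iff; [left; apply IHF1|right; apply IHF2]; auto.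
Qed.

Lemma sc_sub F G H : In G (sc F) -> In H (sc G) -> In H (sc F).
Proof. intros; eapply sc_trans; eauto. Qed.

Lemma sc_And F A B : In (And A B) (sc F) -> In A (sc F) /\ In B (sc F).
Proof. intros H; split; eapply sc_sub; eauto; simpl; right; apply in_app_iff; auto using sc_self. Qed.
Lemma sc_Or F A B : In (Or A B) (sc F) -> In A (sc F) /\ In B (sc F).
Proof. intros H; split; eapply sc_sub; eauto; simpl; right; apply in_app_iff; auto using sc_self. Qed.
Lemma sc_Imp F A B : In (Imp A B) (sc F) -> In A (sc F) /\ In B (sc F).
Proof. intros H; split; eapply sc_sub; eauto; simpl; right; apply in_app_iff; auto using sc_self. Qed.
Lemma sc_Cnd F A B : In (Cnd A B) (sc F) -> In A (sc F) /\ In B (sc F) /\ In (Imp A B) (sc F).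
Proof. intros H; split; [|split]; eapply sc_sub; eauto; simpl; right.
  - right; apply in_app_iff; auto using sc_self.
  - right; apply in_app_iff; auto using sc_self.
  - left; auto. Qed.

Definition formula_eq_dec (A B : formula) : {A = B} + {A <> B}.
Proof. decide equality; apply Nat.eq_dec. Defined.
Definition lform_eq_dec (f g : lform) : {f = g} + {f <> g}.
Proof. decide equality; try apply Nat.eq_dec; apply formula_eq_dec. Defined.

Inductive step := SAll (F : formula) | SEx (F : formula) | SR (A B : formula) | SL (A B : formula).

Fixpoint wd (p : list step) : nat :=
  match p with
  | [] => 0
  | SAll _ :: q | SEx _ :: q => S (wd q)
  | _ :: q => wd q
  end.

Fixpoint chainL (p : list step) : list (formula * formula) :=
  match p with SL A B :: q => (A,B) :: chainL q | _ => [] end.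

Fixpoint wf (w : bool) (p : list step) : Prop :=
  match p with
  | [] => w = true
  | SAll _ :: q | SEx _ :: q => w = true /\ wf false q
  | SR _ _ :: q => w = false /\ wf true q
  | SL A B :: q => w = false /\ wf false q /\ ~ In (A,B) (chainL q)
  end.

Definition stepOK (Sc : list formula) (s : step) : Prop :=
  match s with SAll F | SEx F => In F Sc | SR A B | SL A B => In A Sc /\ In B Sc end.

Definition upd (f : nat -> list step) (x : nat) (v : list step) : nat -> list step :=
  fun y => if Nat.eq_dec y x then v else f y.

Definition persL (f : lform) : Prop :=
  match f with InN _ _ | Mem _ _ | Sub _ _ | FAll _ _ => True | _ => False end.
Definition persR (f : lform) : Prop :=
  match f with FEx _ _ | FCnd _ _ _ _ => True | _ => False end.

Definition fOK (Sc : list formula) (f : lform) : Prop :=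
  match f with
  | Lab _ F | FEx _ F | FAll _ F => In F Sc
  | FCnd _ _ A B => In (Cnd A B) Sc
  | _ => True end.

Definition lv (M : nat) (aw an : nat -> list step) (f : lform) : Prop :=
  match f with
  | InN a x => wd (an a) = wd (aw x)
  | Mem x a => wd (aw x) = S (wd (an a))
  | Sub a b => wd (an a) = wd (an b)
  | Lab x F => cd F + wd (aw x) <= M
  | FEx a F | FAll a F => S (cd F + wd (an a)) <= M
  | FCnd x a A B => cd (Cnd A B) + wd (aw x) <= M
  end.

Definition SIL (H : list sequent) (G D : list lform) (f : lform) : Prop :=
  match f with
  | Lab x (And A B) => dA H G (Lab x A) /\ dA H G (Lab x B)
  | Lab x (Or A B) => dA H G (Lab x A) \/ dA H G (Lab x B)
  | Lab x (Imp A B) => dA H G (Lab x B) \/ dS H D (Lab x A)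
  | FEx a A => exists x, In (Mem x a) G /\ dA H G (Lab x A)
  | FCnd x a A B => exists c, In (InN c x) G /\ In (Sub c a) G /\ dA H G (FEx c A)
                              /\ In (FAll c (Imp A B)) G
  | _ => True end.

Definition SIR (H : list sequent) (G D : list lform) (f : lform) : Prop :=
  match f with
  | Lab x (And A B) => dS H D (Lab x A) \/ dS H D (Lab x B)
  | Lab x (Or A B) => dS H D (Lab x A) /\ dS H D (Lab x B)
  | Lab x (Cnd A B) => exists a, In (InN a x) G /\ dA H G (FEx a A) /\ In (FCnd x a A B) D
  | FAll a A => exists x, In (Mem x a) G /\ dS H D (Lab x A)
  | _ => True end.

Definition recW (G D : list lform) (H : list sequent) (aw an : nat -> list step) (x : nat) : Prop :=
  aw x = [] \/
  (exists A a, aw x = SAll A :: an a /\ In (Mem x a) G /\ dS H D (Lab x A)) \/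
  (exists A a, aw x = SEx A :: an a /\ In (Mem x a) G /\ dA H G (Lab x A)).

Definition recN (G D : list lform) (H : list sequent) (aw an : nat -> list step) (a : nat) : Prop :=
  (exists A B x, an a = SR A B :: aw x /\ In (InN a x) G /\ dA H G (FEx a A)
                 /\ In (FCnd x a A B) D) \/
  (exists A B b x, an a = SL A B :: an b /\ In (InN a x) G /\ In (Sub a b) G
                   /\ In (InN b x) G /\ dA H G (FEx a A) /\ In (FAll a (Imp A B)) G).

Definition labs_occ (f : lform) (G D : list lform) : Prop :=
  (forall x, In x (wlabs f) -> occW x G D) /\ (forall a, In a (nlabs f) -> occN a G D).

Record InvW (A0 : formula) (G D : list lform) (H : list sequent) (aw an : nat -> list step) : Prop := {
  i_pL : forall f, dA H G f -> persL f -> In f G;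
  i_pR : forall f, dS H D f -> persR f -> In f D;
  i_lab : forall f, dA H G f \/ dS H D f -> labs_occ f G D;
  i_fok : forall f, dA H G f \/ dS H D f -> fOK (sc A0) f /\ lv (cd A0) aw an f;
  i_SIL : forall f, dA H G f -> In f G \/ SIL H G D f;
  i_SIR : forall f, dS H D f -> In f D \/ SIR H G D f;
  i_cnd : forall x a A B, dA H G (FCnd x a A B) -> In (InN a x) G /\ dA H G (FEx a A);
  i_own : forall a x y, In (InN a x) G -> In (InN a y) G -> x = y;
  i_injW : forall x y, occW x G D -> occW y G D -> aw x = aw y -> x = y;
  i_injN : forall a b, occN a G D -> occN b G D -> an a = an b -> a = b;
  i_W : forall x, occW x G D -> recW G D H aw an x /\ wf true (aw x)
                  /\ Forall (stepOK (sc A0)) (aw x) /\ wd (aw x) <= cd A0;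
  i_N : forall a, occN a G D -> recN G D H aw an a /\ wf false (an a)
                  /\ Forall (stepOK (sc A0)) (an a) /\ wd (an a) <= cd A0
}.

Definition InvB (A0 : formula) (B : list sequent) : Prop :=
  match B with
  | [] => False
  | (G, D) :: H => exists aw an, InvW A0 G D H aw an
  end.

Lemma dA_cons H G D G' f : dA ((G,D)::H) G' f <-> In f G' \/ dA H G f.
Proof.
  unfold dA; split.
  - intros [Hf|[S [[<-|HS] Hf]]]; auto. right; right; eauto.
  - intros [Hf|[Hf|[S [HS Hf]]]]; auto.
    + right; exists (G,D); simpl; auto.
    + right; exists S; simpl; auto.
Qed.

Lemma dS_cons H G D D' f : dS ((G,D)::H) D' f <-> In f D' \/ dS H D f.
Proof.
  unfold dS; split.
  - intros [Hf|[S [[<-|HS] Hf]]]; auto. right; right; eauto.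
  - intros [Hf|[Hf|[S [HS Hf]]]]; auto.
    + right; exists (G,D); simpl; auto.
    + right; exists S; simpl; auto.
Qed.

Lemma dA_mono H G D G' f : dA H G f -> dA ((G,D)::H) G' f.
Proof. intros; apply dA_cons; auto. Qed.
Lemma dS_mono H G D D' f : dS H D f -> dS ((G,D)::H) D' f.
Proof. intros; apply dS_cons; auto. Qed.
Lemma dA_here H G f : In f G -> dA H G f.
Proof. unfold dA; auto. Qed.
Lemma dS_here H D f : In f D -> dS H D f.
Proof. unfold dS; auto. Qed.

Lemma lv_agree M aw an aw' an' f :
  (forall x, In x (wlabs f) -> aw' x = aw x) ->
  (forall a, In a (nlabs f) -> an' a = an a) ->
  lv M aw an f -> lv M aw' an' f.
Proof.
  destruct f; simpl; intros Hw Hn Hl;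
  repeat match goal with
  | |- context [aw' ?x] => rewrite (Hw x) by auto
  | |- context [an' ?x] => rewrite (Hn x) by auto
  end; auto.
Qed.

Lemma SIL_mono H G D G' D' f :
  (forall g, In g G -> persL g -> In g G') ->
  SIL H G D f -> SIL ((G,D)::H) G' D' f.
Proof.
  intros Hp. destruct f; simpl; auto.
  - destruct A; auto; simpl; intros Hs.
    + destruct Hs; split; apply dA_mono; auto.
    + destruct Hs as [Hs|Hs]; [left|right]; apply dA_mono; auto.
    + destruct Hs as [Hs|Hs]; [left; apply dA_mono|right; apply dS_mono]; auto.
  - intros [x [H1 H2]]; exists x; split; [apply Hp; simpl; auto|apply dA_mono; auto].
  - intros [c [H1 [H2 [H3 H4]]]]; exists c; repeat split;
      try (apply Hp; simpl; auto); apply dA_mono; auto.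
Qed.

Lemma SIR_mono H G D G' D' f :
  (forall g, In g G -> persL g -> In g G') ->
  (forall g, In g D -> persR g -> In g D') ->
  SIR H G D f -> SIR ((G,D)::H) G' D' f.
Proof.
  intros Hp Hq. destruct f; simpl; auto.
  - destruct A; auto; simpl; intros Hs.
    + destruct Hs as [Hs|Hs]; [left|right]; apply dS_mono; auto.
    + destruct Hs; split; apply dS_mono; auto.
    + destruct Hs as [a [H1 [H2 H3]]]; exists a; repeat split;
        [apply Hp; simpl; auto|apply dA_mono; auto|apply Hq; simpl; auto].
  - intros [x [H1 H2]]; exists x; split; [apply Hp; simpl; auto|apply dS_mono; auto].
Qed.

Lemma occW_here x f G D : (In f G \/ In f D) -> In x (wlabs f) -> occW x G D.
Proof. intros; exists f; auto. Qed.
Lemma occN_here a f G D : (In f G \/ In f D) -> In a (nlabs f) -> occN a G D.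
Proof. intros; exists f; auto. Qed.

Lemma recW_mono G D H G' D' aw an aw' an' x :
  (forall g, In g G -> persL g -> In g G') ->
  (forall y, occW y G D -> aw' y = aw y) ->
  (forall a, occN a G D -> an' a = an a) ->
  occW x G D ->
  recW G D H aw an x -> recW G' D' ((G,D)::H) aw' an' x.
Proof.
  intros Hp Hw Hn Hx [E|[[A [a [E [H1 H2]]]]|[A [a [E [H1 H2]]]]]]; unfold recW;
    rewrite (Hw x Hx).
  - left; auto.
  - right; left; exists A, a. rewrite (Hn a) by (eapply occN_here; [left; exact H1|simpl; auto]).
    repeat split; [exact E|apply Hp; simpl; auto|apply dS_mono; auto].
  - right; right; exists A, a. rewrite (Hn a) by (eapply occN_here; [left; exact H1|simpl; auto]).
    repeat split; [exact E|apply Hp; simpl; auto|apply dA_mono; auto].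
Qed.

Lemma recN_mono G D H G' D' aw an aw' an' a :
  (forall g, In g G -> persL g -> In g G') ->
  (forall g, In g D -> persR g -> In g D') ->
  (forall y, occW y G D -> aw' y = aw y) ->
  (forall a, occN a G D -> an' a = an a) ->
  occN a G D ->
  recN G D H aw an a -> recN G' D' ((G,D)::H) aw' an' a.
Proof.
  intros Hp Hq Hw Hn Ha [[A [B [x [E [H1 [H2 H3]]]]]]|[A [B [b [x [E [H1 [H2 [H3 [H4 H5]]]]]]]]]];
    unfold recN; rewrite (Hn a Ha).
  - left; exists A, B, x. rewrite (Hw x) by (eapply occW_here; [left; exact H1|simpl; auto]).
    repeat split; [exact E|apply Hp; simpl; auto|apply dA_mono; auto|apply Hq; simpl; auto].
  - right; exists A, B, b, x. rewrite (Hn b) by (eapply occN_here; [left; exact H2|simpl; auto]).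
    repeat split; try (apply Hp; simpl; auto). exact E. apply dA_mono; auto.
Qed.

Lemma frame A0 G D H G' D' aw an aw' an' (pG pD : option lform) (nG nD : list lform) :
 InvW A0 G D H aw an ->
 (forall f, In f G -> In f G' \/ pG = Some f) ->
 (forall f, In f D -> In f D' \/ pD = Some f) ->
 (forall f, In f G' -> In f G \/ In f nG) ->
 (forall f, In f D' -> In f D \/ In f nD) ->
 (forall p, pG = Some p -> ~ persL p /\ labs_occ p G' D' /\ SIL ((G,D)::H) G' D' p) ->
 (forall p, pD = Some p -> ~ persR p /\ labs_occ p G' D' /\ SIR ((G,D)::H) G' D' p) ->
 (forall f, In f nG \/ In f nD -> fOK (sc A0) f /\ lv (cd A0) aw' an' f) ->
 (forall x a A B, In (FCnd x a A B) nG -> In (InN a x) G' /\ dA ((G,D)::H) G' (FEx a A)) ->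
 (forall a x y, In (InN a x) G' -> In (InN a y) G' -> x = y) ->
 (forall x, occW x G D -> aw' x = aw x) ->
 (forall a, occN a G D -> an' a = an a) ->
 (forall x, occW x G' D' -> ~ occW x G D ->
    recW G' D' ((G,D)::H) aw' an' x /\ wf true (aw' x) /\ Forall (stepOK (sc A0)) (aw' x)
    /\ wd (aw' x) <= cd A0 /\ (forall y, occW y G' D' -> aw' y = aw' x -> y = x)) ->
 (forall a, occN a G' D' -> ~ occN a G D ->
    recN G' D' ((G,D)::H) aw' an' a /\ wf false (an' a) /\ Forall (stepOK (sc A0)) (an' a)
    /\ wd (an' a) <= cd A0 /\ (forall b, occN b G' D' -> an' b = an' a -> b = a)) ->
 InvW A0 G' D' ((G,D)::H) aw' an'.
Proof.
  intros I h1 h2 h3 h4 h5 h6 h7 h8 h9 hw hn h10 h11.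
  assert (pG' : forall g, In g G -> persL g -> In g G').
  { intros g Hg Hp. destruct (h1 g Hg) as [?|E]; auto. destruct (h5 g E) as [Hn _]; contradiction. }
  assert (pD' : forall g, In g D -> persR g -> In g D').
  { intros g Hg Hp. destruct (h2 g Hg) as [?|E]; auto. destruct (h6 g E) as [Hn _]; contradiction. }
  assert (oW : forall x, occW x G D -> occW x G' D').
  { intros x [f [[Hf|Hf] Hx]].
    - destruct (h1 f Hf) as [Hf'|E]; [exists f; auto|].
      destruct (h5 f E) as [_ [[Hl _] _]]; auto.
    - destruct (h2 f Hf) as [Hf'|E]; [exists f; auto|].
      destruct (h6 f E) as [_ [[Hl _] _]]; auto. }
  assert (oN : forall x, occN x G D -> occN x G' D').
  { intros x [f [[Hf|Hf] Hx]].
    - destruct (h1 f Hf) as [Hf'|E]; [exists f; auto|].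
      destruct (h5 f E) as [_ [[_ Hl] _]]; auto.
    - destruct (h2 f Hf) as [Hf'|E]; [exists f; auto|].
      destruct (h6 f E) as [_ [[_ Hl] _]]; auto. }
  assert (oldlab : forall f, dA H G f \/ dS H D f ->
            (forall x, In x (wlabs f) -> aw' x = aw x) /\ (forall a, In a (nlabs f) -> an' a = an a)).
  { intros f Hf. destruct (i_lab _ _ _ _ _ _ I f Hf) as [Hl1 Hl2]. split; intros; auto. }
  constructor.
  - intros f Hf Hp. apply dA_cons in Hf as [Hf|Hf]; auto.
    apply pG'; auto. apply (i_pL _ _ _ _ _ _ I); auto.
  - intros f Hf Hp. apply dS_cons in Hf as [Hf|Hf]; auto.
    apply pD'; auto. apply (i_pR _ _ _ _ _ _ I); auto.
  - intros f Hf. rewrite dA_cons, dS_cons in Hf.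
    destruct Hf as [[Hf|Hf]|[Hf|Hf]].
    + split; intros; eapply occW_here || eapply occN_here; eauto.
    + destruct (i_lab _ _ _ _ _ _ I f (or_introl Hf)) as [Hl1 Hl2]; split; auto.
    + split; intros; eapply occW_here || eapply occN_here; eauto.
    + destruct (i_lab _ _ _ _ _ _ I f (or_intror Hf)) as [Hl1 Hl2]; split; auto.
  - intros f Hf. rewrite dA_cons, dS_cons in Hf.
    assert (Hold : dA H G f \/ dS H D f -> fOK (sc A0) f /\ lv (cd A0) aw' an' f).
    { intros Ho. destruct (i_fok _ _ _ _ _ _ I f Ho) as [F1 F2]. split; auto.
      destruct (oldlab f Ho). eapply lv_agree; eauto. }
    destruct Hf as [[Hf|Hf]|[Hf|Hf]].
    + destruct (h3 f Hf); [apply Hold; left; apply dA_here; auto|apply h7; auto].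
    + apply Hold; auto.
    + destruct (h4 f Hf); [apply Hold; right; apply dS_here; auto|apply h7; auto].
    + apply Hold; auto.
  - intros f Hf. apply dA_cons in Hf as [Hf|Hf]; auto.
    destruct (i_SIL _ _ _ _ _ _ I f Hf) as [Hg|Hs].
    + destruct (h1 f Hg) as [?|E]; auto. right; apply (h5 f E).
    + right; apply SIL_mono; auto.
  - intros f Hf. apply dS_cons in Hf as [Hf|Hf]; auto.
    destruct (i_SIR _ _ _ _ _ _ I f Hf) as [Hg|Hs].
    + destruct (h2 f Hg) as [?|E]; auto. right; apply (h6 f E).
    + right; apply SIR_mono; auto.
  - intros x a A B Hf. apply dA_cons in Hf as [Hf|Hf].
    + destruct (h3 _ Hf) as [Hg|Hn]; [|exact (h8 x a A B Hn)].
      destruct (i_cnd _ _ _ _ _ _ I x a A B (dA_here _ _ _ Hg)).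
      split; [apply pG'; simpl; auto|apply dA_mono; auto].
    + destruct (i_cnd _ _ _ _ _ _ I x a A B Hf).
      split; [apply pG'; simpl; auto|apply dA_mono; auto].
  - exact h9.
  - intros x y Hx Hy E.
    destruct (classic (occW x G D)) as [Ox|Ox]; [|destruct (h10 x Hx Ox) as [_ [_ [_ [_ Hu]]]]; symmetry; apply Hu; auto].
    destruct (classic (occW y G D)) as [Oy|Oy]; [|destruct (h10 y Hy Oy) as [_ [_ [_ [_ Hu]]]]; apply Hu; auto].
    rewrite (hw x Ox), (hw y Oy) in E. apply (i_injW _ _ _ _ _ _ I); auto.
  - intros x y Hx Hy E.
    destruct (classic (occN x G D)) as [Ox|Ox]; [|destruct (h11 x Hx Ox) as [_ [_ [_ [_ Hu]]]]; symmetry; apply Hu; auto].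
    destruct (classic (occN y G D)) as [Oy|Oy]; [|destruct (h11 y Hy Oy) as [_ [_ [_ [_ Hu]]]]; apply Hu; auto].
    rewrite (hn x Ox), (hn y Oy) in E. apply (i_injN _ _ _ _ _ _ I); auto.
  - intros x Hx. destruct (classic (occW x G D)) as [Ox|Ox].
    + destruct (i_W _ _ _ _ _ _ I x Ox) as [R1 [R2 [R3 R4]]].
      rewrite (hw x Ox). repeat split; auto. eapply recW_mono; eauto.
    + destruct (h10 x Hx Ox) as [R1 [R2 [R3 [R4 _]]]]; auto.
  - intros x Hx. destruct (classic (occN x G D)) as [Ox|Ox].
    + destruct (i_N _ _ _ _ _ _ I x Ox) as [R1 [R2 [R3 R4]]].
      rewrite (hn x Ox). repeat split; auto. eapply recN_mono; eauto.
    + destruct (h11 x Hx Ox) as [R1 [R2 [R3 [R4 _]]]]; auto.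
Qed.

Lemma frame_static A0 G D H G' D' aw an (pG pD : option lform) (nG nD : list lform) :
 InvW A0 G D H aw an ->
 (forall f, In f G -> In f G' \/ pG = Some f) ->
 (forall f, In f D -> In f D' \/ pD = Some f) ->
 (forall f, In f G' -> In f G \/ In f nG) ->
 (forall f, In f D' -> In f D \/ In f nD) ->
 (forall p, pG = Some p -> ~ persL p /\ labs_occ p G' D' /\ SIL ((G,D)::H) G' D' p) ->
 (forall p, pD = Some p -> ~ persR p /\ labs_occ p G' D' /\ SIR ((G,D)::H) G' D' p) ->
 (forall f, In f nG \/ In f nD -> fOK (sc A0) f /\ lv (cd A0) aw an f /\ labs_occ f G D) ->
 (forall x a A B, In (FCnd x a A B) nG -> In (InN a x) G' /\ dA ((G,D)::H) G' (FEx a A)) ->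
 (forall a x, ~ In (InN a x) nG) ->
 InvW A0 G' D' ((G,D)::H) aw an.
Proof.
  intros I h1 h2 h3 h4 h5 h6 h7 h8 h9.
  assert (oW : forall x, occW x G' D' -> occW x G D).
  { intros x [f [[Hf|Hf] Hx]].
    - destruct (h3 f Hf) as [Ho|Hn]; [exists f; auto|]. apply (h7 f); auto.
    - destruct (h4 f Hf) as [Ho|Hn]; [exists f; auto|]. apply (h7 f); auto. }
  assert (oN : forall x, occN x G' D' -> occN x G D).
  { intros x [f [[Hf|Hf] Hx]].
    - destruct (h3 f Hf) as [Ho|Hn]; [exists f; auto|]. apply (h7 f); auto.
    - destruct (h4 f Hf) as [Ho|Hn]; [exists f; auto|]. apply (h7 f); auto. }
  eapply frame with (pG := pG) (pD := pD) (nG := nG) (nD := nD); eauto.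
  - intros f Hf; destruct (h7 f Hf) as [? [? ?]]; auto.
  - intros a x y Hx Hy.
    destruct (h3 _ Hx) as [Hx'|Hx']; [|exfalso; eapply h9; eauto].
    destruct (h3 _ Hy) as [Hy'|Hy']; [|exfalso; eapply h9; eauto].
    eapply (i_own _ _ _ _ _ _ I); eauto.
  - intros x Hx Hn; exfalso; auto.
  - intros x Hx Hn; exfalso; auto.
Qed.

Lemma perm_in {T} (G ctx : list T) p : Permutation G (p :: ctx) -> forall f, In f G <-> p = f \/ In f ctx.
Proof. intros Hp f. split; intros Hf.
  - apply (Permutation_in f) in Hp; auto.
  - apply (Permutation_in f (Permutation_sym Hp)); simpl; auto.
Qed.

Lemma old_G A0 G D H aw an f : InvW A0 G D H aw an -> In f G ->
  fOK (sc A0) f /\ lv (cd A0) aw an f /\ labs_occ f G D.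
Proof. intros I Hf. destruct (i_fok _ _ _ _ _ _ I f (or_introl (dA_here _ _ _ Hf))).
  split; [|split]; auto. apply (i_lab _ _ _ _ _ _ I); left; apply dA_here; auto. Qed.
Lemma old_D A0 G D H aw an f : InvW A0 G D H aw an -> In f D ->
  fOK (sc A0) f /\ lv (cd A0) aw an f /\ labs_occ f G D.
Proof. intros I Hf. destruct (i_fok _ _ _ _ _ _ I f (or_intror (dS_here _ _ _ Hf))).
  split; [|split]; auto. apply (i_lab _ _ _ _ _ _ I); right; apply dS_here; auto. Qed.

Definition newelt (H : list sequent) (G D G' D' : list lform) : Prop :=
  (exists f, In f G' /\ ~ dA H G f) \/ (exists f, In f D' /\ ~ dS H D f).

Ltac memb := repeat match goal with
  | H : forall f, In f ?G <-> _ |- _ => setoid_rewrite H; clear H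
  end; simpl; intuition (subst; auto).

Lemma r_Land A0 G D H aw an x A B ctx G' D' :
  InvW A0 G D H aw an ->
  (forall f, In f G <-> Lab x (And A B) = f \/ In f ctx) ->
  ~ sLand H G x A B ->
  (forall f, In f G' <-> Lab x A = f \/ Lab x B = f \/ In f ctx) ->
  (forall f, In f D' <-> In f D) ->
  InvW A0 G' D' ((G,D)::H) aw an /\ newelt H G D G' D'.
Proof.
  intros I HG Hs HG' HD'.
  assert (Hp : In (Lab x (And A B)) G) by (apply HG; auto).
  destruct (old_G _ _ _ _ _ _ _ I Hp) as [Fo [Lv Lo]]; simpl in Fo, Lv.
  destruct (sc_And _ _ _ Fo) as [FA FB].
  split.
  - apply frame_static with (pG := Some (Lab x (And A B))) (pD := None)
      (nG := [Lab x A; Lab x B]) (nD := []); auto.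
    + intros f Hf. apply HG in Hf as [<-|Hf]; auto. left; apply HG'; auto.
    + intros f Hf; left; apply HD'; auto.
    + intros f Hf. apply HG' in Hf as [<-|[<-|Hf]]; simpl; auto. left; apply HG; auto.
    + intros f Hf; left; apply HD'; auto.
    + intros p E; inversion E; subst; clear E. simpl; split; [auto|split].
      * split; simpl; intros y Hy; [destruct Hy as [<-|[]]; exists (Lab x A); split; [left; apply HG'; auto|simpl; auto]|destruct Hy].
      * split; apply dA_cons; left; apply HG'; auto.
    + intros p E; discriminate.
    + intros f [Hf|[]]. destruct Hf as [<-|[<-|[]]]; simpl; (split; [auto|split; [lia|]]);
        split; simpl; intros y Hy; try destruct Hy as [<-|[]]; try destruct Hy; apply Lo; simpl; auto.
    + intros ? ? ? ? Hf; simpl in Hf; intuition discriminate.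
    + intros a y Hf; simpl in Hf; intuition discriminate.
  - unfold sLand in Hs. left.
    destruct (classic (dA H G (Lab x A))) as [Ha|Ha].
    + exists (Lab x B); split; [apply HG'; auto|]. intro Hb; apply Hs; auto.
    + exists (Lab x A); split; [apply HG'; auto|auto].
Qed.

Lemma add_only A0 G D H aw an G' D' nG nD :
 InvW A0 G D H aw an ->
 (forall f, In f G' <-> In f nG \/ In f G) ->
 (forall f, In f D' <-> In f nD \/ In f D) ->
 (forall f, In f nG \/ In f nD -> fOK (sc A0) f /\ lv (cd A0) aw an f /\ labs_occ f G D) ->
 (forall x a A B, In (FCnd x a A B) nG -> In (InN a x) G /\ (dA H G (FEx a A) \/ In (FEx a A) nG)) ->
 (forall a x, ~ In (InN a x) nG) ->
 InvW A0 G' D' ((G,D)::H) aw an.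
Proof.
  intros I HG HD h7 h8 h9.
  apply frame_static with (pG := None) (pD := None) (nG := nG) (nD := nD); auto.
  - intros f Hf; left; apply HG; auto.
  - intros f Hf; left; apply HD; auto.
  - intros f Hf; apply HG in Hf; tauto.
  - intros f Hf; apply HD in Hf; tauto.
  - intros; discriminate.
  - intros; discriminate.
  - intros x a A B Hf. destruct (h8 x a A B Hf) as [? [?|?]]. split; [apply HG; auto|apply dA_mono; auto].
    split; [apply HG; auto|apply dA_cons; left; apply HG; auto].
Qed.

Ltac lo := split; simpl; intros ?y ?Hy; repeat destruct Hy as [<-|Hy]; try contradiction;
  match goal with
  | L : labs_occ _ _ _ |- occW _ _ _ => apply (proj1 L); simpl; tauto
  | L : labs_occ _ _ _ |- occN _ _ _ => apply (proj2 L); simpl; tauto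
  end.

Lemma r_Lall A0 G D H aw an x a A G' D' :
  InvW A0 G D H aw an -> In (Mem x a) G -> In (FAll a A) G -> ~ sLall H G x a A ->
  (forall f, In f G' <-> In f [Lab x A] \/ In f G) -> (forall f, In f D' <-> In f [] \/ In f D) ->
  InvW A0 G' D' ((G,D)::H) aw an /\ newelt H G D G' D'.
Proof.
  intros I H1 H2 Hs HG HD.
  destruct (old_G _ _ _ _ _ _ _ I H1) as [F1 [L1 O1]].
  destruct (old_G _ _ _ _ _ _ _ I H2) as [F2 [L2 O2]]. simpl in F1, L1, F2, L2.
  split.
  - eapply add_only; [exact I|exact HG|exact HD| | |].
    + intros f [[<-|[]]|[]]; simpl; split; [auto|split; [lia|lo]].
    + intros ? ? ? ? [E|[]]; discriminate.
    + intros ? ? [E|[]]; discriminate.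
  - left; exists (Lab x A); split; [apply HG; simpl; auto|]. intro; apply Hs; red; intros; auto.
Qed.

Lemma r_Rex A0 G D H aw an x a A G' D' :
  InvW A0 G D H aw an -> In (Mem x a) G -> In (FEx a A) D -> ~ sRex H G D x a A ->
  (forall f, In f G' <-> In f [] \/ In f G) -> (forall f, In f D' <-> In f [Lab x A] \/ In f D) ->
  InvW A0 G' D' ((G,D)::H) aw an /\ newelt H G D G' D'.
Proof.
  intros I H1 H2 Hs HG HD.
  destruct (old_G _ _ _ _ _ _ _ I H1) as [F1 [L1 O1]].
  destruct (old_D _ _ _ _ _ _ _ I H2) as [F2 [L2 O2]]. simpl in F1, L1, F2, L2.
  split.
  - eapply add_only; [exact I|exact HG|exact HD| | |].
    + intros f [[]|[<-|[]]]; simpl; split; [auto|split; [lia|lo]].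
    + intros ? ? ? ? [].
    + intros ? ? [].
  - right; exists (Lab x A); split; [apply HD; simpl; auto|]. intro; apply Hs; red; intros; auto.
Qed.

Lemma r_Ref A0 G D H aw an a G' D' :
  InvW A0 G D H aw an -> ~ sRef G D a ->
  (forall f, In f G' <-> In f [Sub a a] \/ In f G) -> (forall f, In f D' <-> In f [] \/ In f D) ->
  InvW A0 G' D' ((G,D)::H) aw an /\ newelt H G D G' D'.
Proof.
  intros I Hs HG HD. unfold sRef in Hs.
  assert (Ha : occN a G D) by (apply NNPP; intro; apply Hs; intro; contradiction).
  assert (Hn : ~ In (Sub a a) G) by (intro; apply Hs; red; intros; auto).
  split.
  - eapply add_only; [exact I|exact HG|exact HD| | |].
    + intros f [[<-|[]]|[]]; simpl; split; [auto|split; [auto|]].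
      split; simpl; intros y Hy; [contradiction|]. destruct Hy as [<-|[<-|[]]]; auto.
    + intros ? ? ? ? [E|[]]; discriminate.
    + intros ? ? [E|[]]; discriminate.
  - left; exists (Sub a a); split; [apply HG; simpl; auto|].
    intro Hd; apply Hn; apply (i_pL _ _ _ _ _ _ I); simpl; auto.
Qed.

Lemma r_Tr A0 G D H aw an a b c G' D' :
  InvW A0 G D H aw an -> In (Sub a b) G -> In (Sub b c) G -> ~ sTr G a b c ->
  (forall f, In f G' <-> In f [Sub a c] \/ In f G) -> (forall f, In f D' <-> In f [] \/ In f D) ->
  InvW A0 G' D' ((G,D)::H) aw an /\ newelt H G D G' D'.
Proof.
  intros I H1 H2 Hs HG HD.
  destruct (old_G _ _ _ _ _ _ _ I H1) as [F1 [L1 O1]].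
  destruct (old_G _ _ _ _ _ _ _ I H2) as [F2 [L2 O2]]. simpl in F1, L1, F2, L2.
  assert (Hn : ~ In (Sub a c) G) by (intro; apply Hs; red; intros; auto).
  split.
  - eapply add_only; [exact I|exact HG|exact HD| | |].
    + intros f [[<-|[]]|[]]; simpl; split; [auto|split; [lia|lo]].
    + intros ? ? ? ? [E|[]]; discriminate.
    + intros ? ? [E|[]]; discriminate.
  - left; exists (Sub a c); split; [apply HG; simpl; auto|].
    intro Hd; apply Hn; apply (i_pL _ _ _ _ _ _ I); simpl; auto.
Qed.

Lemma r_Lsub A0 G D H aw an x a b G' D' :
  InvW A0 G D H aw an -> In (Mem x a) G -> In (Sub a b) G -> ~ sLsub G x a b ->
  (forall f, In f G' <-> In f [Mem x b] \/ In f G) -> (forall f, In f D' <-> In f [] \/ In f D) ->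
  InvW A0 G' D' ((G,D)::H) aw an /\ newelt H G D G' D'.
Proof.
  intros I H1 H2 Hs HG HD.
  destruct (old_G _ _ _ _ _ _ _ I H1) as [F1 [L1 O1]].
  destruct (old_G _ _ _ _ _ _ _ I H2) as [F2 [L2 O2]]. simpl in F1, L1, F2, L2.
  assert (Hn : ~ In (Mem x b) G) by (intro; apply Hs; red; intros; auto).
  split.
  - eapply add_only; [exact I|exact HG|exact HD| | |].
    + intros f [[<-|[]]|[]]; simpl; split; [auto|split; [lia|lo]].
    + intros ? ? ? ? [E|[]]; discriminate.
    + intros ? ? [E|[]]; discriminate.
  - left; exists (Mem x b); split; [apply HG; simpl; auto|].
    intro Hd; apply Hn; apply (i_pL _ _ _ _ _ _ I); simpl; auto.
Qed.

Lemma r_Mon A0 G D H aw an b a A G' D' :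
  InvW A0 G D H aw an -> In (Sub b a) G -> In (FAll a A) G -> ~ sMon G b a A ->
  (forall f, In f G' <-> In f [FAll b A] \/ In f G) -> (forall f, In f D' <-> In f [] \/ In f D) ->
  InvW A0 G' D' ((G,D)::H) aw an /\ newelt H G D G' D'.
Proof.
  intros I H1 H2 Hs HG HD.
  destruct (old_G _ _ _ _ _ _ _ I H1) as [F1 [L1 O1]].
  destruct (old_G _ _ _ _ _ _ _ I H2) as [F2 [L2 O2]]. simpl in F1, L1, F2, L2.
  assert (Hn : ~ In (FAll b A) G) by (intro; apply Hs; red; intros; auto).
  split.
  - eapply add_only; [exact I|exact HG|exact HD| | |].
    + intros f [[<-|[]]|[]]; simpl; split; [auto|split; [lia|lo]].
    + intros ? ? ? ? [E|[]]; discriminate.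
    + intros ? ? [E|[]]; discriminate.
  - left; exists (FAll b A); split; [apply HG; simpl; auto|].
    intro Hd; apply Hn; apply (i_pL _ _ _ _ _ _ I); simpl; auto.
Qed.

Lemma r_Lcnd1 A0 G D H aw an a x A B G' D' :
  InvW A0 G D H aw an -> In (InN a x) G -> In (Lab x (Cnd A B)) G -> ~ sLcnd H G D a x A B ->
  (forall f, In f G' <-> In f [] \/ In f G) -> (forall f, In f D' <-> In f [FEx a A] \/ In f D) ->
  InvW A0 G' D' ((G,D)::H) aw an /\ newelt H G D G' D'.
Proof.
  intros I H1 H2 Hs HG HD.
  destruct (old_G _ _ _ _ _ _ _ I H1) as [F1 [L1 O1]].
  destruct (old_G _ _ _ _ _ _ _ I H2) as [F2 [L2 O2]]. simpl in F1, L1, F2, L2.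
  destruct (sc_Cnd _ _ _ F2) as [FA [FB FI]].
  split.
  - eapply add_only; [exact I|exact HG|exact HD| | |].
    + intros f [[]|[<-|[]]]; simpl; split; [auto|split; [lia|lo]].
    + intros ? ? ? ? [].
    + intros ? ? [].
  - right; exists (FEx a A); split; [apply HD; simpl; auto|]. intro; apply Hs; red; intros; auto.
Qed.

Lemma r_Lcnd2 A0 G D H aw an a x A B G' D' :
  InvW A0 G D H aw an -> In (InN a x) G -> In (Lab x (Cnd A B)) G -> ~ sLcnd H G D a x A B ->
  (forall f, In f G' <-> In f [FEx a A; FCnd x a A B] \/ In f G) -> (forall f, In f D' <-> In f [] \/ In f D) ->
  InvW A0 G' D' ((G,D)::H) aw an /\ newelt H G D G' D'.
Proof.
  intros I H1 H2 Hs HG HD.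
  destruct (old_G _ _ _ _ _ _ _ I H1) as [F1 [L1 O1]].
  destruct (old_G _ _ _ _ _ _ _ I H2) as [F2 [L2 O2]]. simpl in F1, L1, F2, L2.
  destruct (sc_Cnd _ _ _ F2) as [FA [FB FI]].
  split.
  - eapply add_only; [exact I|exact HG|exact HD| | |].
    + intros f [[<-|[<-|[]]]|[]]; simpl; split; auto; split; try lia; lo.
    + intros ? ? ? ? [E|[E|[]]]; inversion E; subst. split; simpl; auto.
    + intros ? ? [E|[E|[]]]; discriminate.
  - left. unfold sLcnd in Hs.
    destruct (classic (dA H G (FEx a A))) as [Ha|Ha].
    + exists (FCnd x a A B); split; [apply HG; simpl; auto|]. intro; apply Hs; intros; auto.
    + exists (FEx a A); split; [apply HG; simpl; auto|]. intro; apply Ha; auto.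
Qed.

Lemma r_Rbar1 A0 G D H aw an c x a A B G' D' :
  InvW A0 G D H aw an -> In (InN c x) G -> In (Sub c a) G -> In (FCnd x a A B) D -> ~ sRbar H G D c x a A B ->
  (forall f, In f G' <-> In f [] \/ In f G) -> (forall f, In f D' <-> In f [FEx c A] \/ In f D) ->
  InvW A0 G' D' ((G,D)::H) aw an /\ newelt H G D G' D'.
Proof.
  intros I H1 H2 H3 Hs HG HD.
  destruct (old_G _ _ _ _ _ _ _ I H1) as [F1 [L1 O1]].
  destruct (old_G _ _ _ _ _ _ _ I H2) as [F2 [L2 O2]].
  destruct (old_D _ _ _ _ _ _ _ I H3) as [F3 [L3 O3]]. simpl in F1, L1, F2, L2, F3, L3.
  destruct (sc_Cnd _ _ _ F3) as [FA [FB FI]].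
  split.
  - eapply add_only; [exact I|exact HG|exact HD| | |].
    + intros f [[]|[<-|[]]]; simpl; split; [auto|split; [lia|lo]].
    + intros ? ? ? ? [].
    + intros ? ? [].
  - right; exists (FEx c A); split; [apply HD; simpl; auto|].
    intro Hd; apply Hs; intros; left. apply (i_pR _ _ _ _ _ _ I); simpl; auto.
Qed.

Lemma r_Rbar2 A0 G D H aw an c x a A B G' D' :
  InvW A0 G D H aw an -> In (InN c x) G -> In (Sub c a) G -> In (FCnd x a A B) D -> ~ sRbar H G D c x a A B ->
  (forall f, In f G' <-> In f [] \/ In f G) -> (forall f, In f D' <-> In f [FAll c (Imp A B)] \/ In f D) ->
  InvW A0 G' D' ((G,D)::H) aw an /\ newelt H G D G' D'.
Proof.
  intros I H1 H2 H3 Hs HG HD.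
  destruct (old_G _ _ _ _ _ _ _ I H1) as [F1 [L1 O1]].
  destruct (old_G _ _ _ _ _ _ _ I H2) as [F2 [L2 O2]].
  destruct (old_D _ _ _ _ _ _ _ I H3) as [F3 [L3 O3]]. simpl in F1, L1, F2, L2, F3, L3.
  destruct (sc_Cnd _ _ _ F3) as [FA [FB FI]].
  split.
  - eapply add_only; [exact I|exact HG|exact HD| | |].
    + intros f [[]|[<-|[]]]; simpl; split; [auto|split; [lia|lo]].
    + intros ? ? ? ? [].
    + intros ? ? [].
  - right; exists (FAll c (Imp A B)); split; [apply HD; simpl; auto|].
    intro Hd; apply Hs; intros; right; auto.
Qed.

Lemma r_Rand A0 G D H aw an x A B ctx C G' D' :
  InvW A0 G D H aw an ->
  (forall f, In f D <-> Lab x (And A B) = f \/ In f ctx) ->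
  (C = A \/ C = B) -> ~ sRand H D x A B ->
  (forall f, In f G' <-> In f G) ->
  (forall f, In f D' <-> Lab x C = f \/ In f ctx) ->
  InvW A0 G' D' ((G,D)::H) aw an /\ newelt H G D G' D'.
Proof.
  intros I HD HC Hs HG' HD'.
  assert (Hp : In (Lab x (And A B)) D) by (apply HD; auto).
  destruct (old_D _ _ _ _ _ _ _ I Hp) as [Fo [Lv Lo]]; simpl in Fo, Lv.
  destruct (sc_And _ _ _ Fo) as [FA FB].
  split.
  - apply frame_static with (pG := None) (pD := Some (Lab x (And A B)))
      (nG := []) (nD := [Lab x C]).
    + exact I.
    + intros f Hf; left; apply HG'; auto.
    + intros f Hf. apply HD in Hf as [<-|Hf]; auto. left; apply HD'; auto.
    + intros f Hf; left; apply HG'; auto.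
    + intros f Hf. apply HD' in Hf as [<-|Hf]; simpl; auto. left; apply HD; auto.
    + intros p E; discriminate.
    + intros p E; inversion E; subst; clear E. simpl; split; [auto|split].
      * split; simpl; intros y Hy; [destruct Hy as [<-|[]]; exists (Lab x C); split; [right; apply HD'; auto|simpl; auto]|destruct Hy].
      * destruct HC as [-> | ->]; [left|right]; apply dS_cons; left; apply HD'; auto.
    + intros f [[]|Hf]. destruct Hf as [<-|[]]; simpl; (split; [destruct HC; subst; auto|split; [destruct HC; subst; lia|]]);
        split; simpl; intros y Hy; try destruct Hy as [<-|[]]; try destruct Hy; apply Lo; simpl; auto.
    + intros ? ? ? ? [].
    + intros a y [].
  - unfold sRand in Hs. right. exists (Lab x C); split; [apply HD'; auto|].
    intro Hc; apply Hs; intros _; destruct HC; subst; auto.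
Qed.

Lemma r_Lor A0 G D H aw an x A B ctx C G' D' :
  InvW A0 G D H aw an ->
  (forall f, In f G <-> Lab x (Or A B) = f \/ In f ctx) ->
  (C = A \/ C = B) -> ~ sLor H G x A B ->
  (forall f, In f G' <-> Lab x C = f \/ In f ctx) ->
  (forall f, In f D' <-> In f D) ->
  InvW A0 G' D' ((G,D)::H) aw an /\ newelt H G D G' D'.
Proof.
  intros I HG HC Hs HG' HD'.
  assert (Hp : In (Lab x (Or A B)) G) by (apply HG; auto).
  destruct (old_G _ _ _ _ _ _ _ I Hp) as [Fo [Lv Lo]]; simpl in Fo, Lv.
  destruct (sc_Or _ _ _ Fo) as [FA FB].
  split.
  - apply frame_static with (pG := Some (Lab x (Or A B))) (pD := None)
      (nG := [Lab x C]) (nD := []).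
    + exact I.
    + intros f Hf. apply HG in Hf as [<-|Hf]; auto. left; apply HG'; auto.
    + intros f Hf; left; apply HD'; auto.
    + intros f Hf. apply HG' in Hf as [<-|Hf]; simpl; auto. left; apply HG; auto.
    + intros f Hf; left; apply HD'; auto.
    + intros p E; inversion E; subst; clear E. simpl; split; [auto|split].
      * split; simpl; intros y Hy; [destruct Hy as [<-|[]]; exists (Lab x C); split; [left; apply HG'; auto|simpl; auto]|destruct Hy].
      * destruct HC as [-> | ->]; [left|right]; apply dA_cons; left; apply HG'; auto.
    + intros p E; discriminate.
    + intros f [Hf|[]]. destruct Hf as [<-|[]]; simpl; (split; [destruct HC; subst; auto|split; [destruct HC; subst; lia|]]);
        split; simpl; intros y Hy; try destruct Hy as [<-|[]]; try destruct Hy; apply Lo; simpl; auto.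
    + intros ? ? ? ? [E|[]]; discriminate.
    + intros a y [E|[]]; discriminate.
  - unfold sLor in Hs. left. exists (Lab x C); split; [apply HG'; auto|].
    intro Hc; apply Hs; intros _; destruct HC; subst; auto.
Qed.

Lemma r_Ror A0 G D H aw an x A B ctx G' D' :
  InvW A0 G D H aw an ->
  (forall f, In f D <-> Lab x (Or A B) = f \/ In f ctx) ->
  ~ sRor H D x A B ->
  (forall f, In f G' <-> In f G) ->
  (forall f, In f D' <-> Lab x A = f \/ Lab x B = f \/ In f ctx) ->
  InvW A0 G' D' ((G,D)::H) aw an /\ newelt H G D G' D'.
Proof.
  intros I HD Hs HG' HD'.
  assert (Hp : In (Lab x (Or A B)) D) by (apply HD; auto).
  destruct (old_D _ _ _ _ _ _ _ I Hp) as [Fo [Lv Lo]]; simpl in Fo, Lv.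
  destruct (sc_Or _ _ _ Fo) as [FA FB].
  split.
  - apply frame_static with (pG := None) (pD := Some (Lab x (Or A B)))
      (nG := []) (nD := [Lab x A; Lab x B]).
    + exact I.
    + intros f Hf; left; apply HG'; auto.
    + intros f Hf. apply HD in Hf as [<-|Hf]; auto. left; apply HD'; auto.
    + intros f Hf; left; apply HG'; auto.
    + intros f Hf. apply HD' in Hf as [<-|[<-|Hf]]; simpl; auto. left; apply HD; auto.
    + intros p E; discriminate.
    + intros p E; inversion E; subst; clear E. simpl; split; [auto|split].
      * split; simpl; intros y Hy; [destruct Hy as [<-|[]]; exists (Lab x A); split; [right; apply HD'; auto|simpl; auto]|destruct Hy].
      * split; apply dS_cons; left; apply HD'; auto.
    + intros f [[]|Hf]. destruct Hf as [<-|[<-|[]]]; simpl; (split; [auto|split; [lia|]]);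
        split; simpl; intros y Hy; try destruct Hy as [<-|[]]; try destruct Hy; apply Lo; simpl; auto.
    + intros ? ? ? ? [].
    + intros a y [].
  - unfold sRor in Hs. right.
    destruct (classic (dS H D (Lab x A))) as [Ha|Ha].
    + exists (Lab x B); split; [apply HD'; auto|]. intro Hb; apply Hs; auto.
    + exists (Lab x A); split; [apply HD'; auto|auto].
Qed.

Lemma r_Limp1 A0 G D H aw an x A B ctx G' D' :
  InvW A0 G D H aw an ->
  (forall f, In f G <-> Lab x (Imp A B) = f \/ In f ctx) ->
  ~ sLimp H G D x A B ->
  (forall f, In f G' <-> In f ctx) ->
  (forall f, In f D' <-> Lab x A = f \/ In f D) ->
  InvW A0 G' D' ((G,D)::H) aw an /\ newelt H G D G' D'.
Proof.
  intros I HG Hs HG' HD'.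
  assert (Hp : In (Lab x (Imp A B)) G) by (apply HG; auto).
  destruct (old_G _ _ _ _ _ _ _ I Hp) as [Fo [Lv Lo]]; simpl in Fo, Lv.
  destruct (sc_Imp _ _ _ Fo) as [FA FB].
  split.
  - apply frame_static with (pG := Some (Lab x (Imp A B))) (pD := None)
      (nG := []) (nD := [Lab x A]).
    + exact I.
    + intros f Hf. apply HG in Hf as [<-|Hf]; auto. left; apply HG'; auto.
    + intros f Hf; left; apply HD'; auto.
    + intros f Hf. left; apply HG; right; apply HG'; auto.
    + intros f Hf. apply HD' in Hf as [<-|Hf]; simpl; auto.
    + intros p E; inversion E; subst; clear E. simpl; split; [auto|split].
      * split; simpl; intros y Hy; [destruct Hy as [<-|[]]; exists (Lab x A); split; [right; apply HD'; auto|simpl; auto]|destruct Hy].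
      * right; apply dS_cons; left; apply HD'; auto.
    + intros p E; discriminate.
    + intros f [[]|Hf]. destruct Hf as [<-|[]]; simpl; (split; [auto|split; [lia|]]);
        split; simpl; intros y Hy; try destruct Hy as [<-|[]]; try destruct Hy; apply Lo; simpl; auto.
    + intros ? ? ? ? [].
    + intros a y [].
  - unfold sLimp in Hs. right. exists (Lab x A); split; [apply HD'; auto|].
    intro Hc; apply Hs; auto.
Qed.

Lemma r_Limp2 A0 G D H aw an x A B ctx G' D' :
  InvW A0 G D H aw an ->
  (forall f, In f G <-> Lab x (Imp A B) = f \/ In f ctx) ->
  ~ sLimp H G D x A B ->
  (forall f, In f G' <-> Lab x B = f \/ In f ctx) ->
  (forall f, In f D' <-> In f D) ->
  InvW A0 G' D' ((G,D)::H) aw an /\ newelt H G D G' D'.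
Proof.
  intros I HG Hs HG' HD'.
  assert (Hp : In (Lab x (Imp A B)) G) by (apply HG; auto).
  destruct (old_G _ _ _ _ _ _ _ I Hp) as [Fo [Lv Lo]]; simpl in Fo, Lv.
  destruct (sc_Imp _ _ _ Fo) as [FA FB].
  split.
  - apply frame_static with (pG := Some (Lab x (Imp A B))) (pD := None)
      (nG := [Lab x B]) (nD := []).
    + exact I.
    + intros f Hf. apply HG in Hf as [<-|Hf]; auto. left; apply HG'; auto.
    + intros f Hf; left; apply HD'; auto.
    + intros f Hf. apply HG' in Hf as [<-|Hf]; simpl; auto. left; apply HG; auto.
    + intros f Hf; left; apply HD'; auto.
    + intros p E; inversion E; subst; clear E. simpl; split; [auto|split].
      * split; simpl; intros y Hy; [destruct Hy as [<-|[]]; exists (Lab x B); split; [left; apply HG'; auto|simpl; auto]|destruct Hy].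
      * left; apply dA_cons; left; apply HG'; auto.
    + intros p E; discriminate.
    + intros f [Hf|[]]. destruct Hf as [<-|[]]; simpl; (split; [auto|split; [lia|]]);
        split; simpl; intros y Hy; try destruct Hy as [<-|[]]; try destruct Hy; apply Lo; simpl; auto.
    + intros ? ? ? ? [E|[]]; discriminate.
    + intros a y [E|[]]; discriminate.
  - unfold sLimp in Hs. left. exists (Lab x B); split; [apply HG'; auto|].
    intro Hc; apply Hs; auto.
Qed.

Lemma r_Rimp A0 G D H aw an x A B ctx G' D' :
  InvW A0 G D H aw an ->
  (forall f, In f D <-> Lab x (Imp A B) = f \/ In f ctx) ->
  ~ sRimp H G D x A B ->
  (forall f, In f G' <-> Lab x A = f \/ In f G) ->
  (forall f, In f D' <-> Lab x B = f \/ In f ctx) ->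
  InvW A0 G' D' ((G,D)::H) aw an /\ newelt H G D G' D'.
Proof.
  intros I HD Hs HG' HD'.
  assert (Hp : In (Lab x (Imp A B)) D) by (apply HD; auto).
  destruct (old_D _ _ _ _ _ _ _ I Hp) as [Fo [Lv Lo]]; simpl in Fo, Lv.
  destruct (sc_Imp _ _ _ Fo) as [FA FB].
  split.
  - apply frame_static with (pG := None) (pD := Some (Lab x (Imp A B)))
      (nG := [Lab x A]) (nD := [Lab x B]).
    + exact I.
    + intros f Hf; left; apply HG'; auto.
    + intros f Hf. apply HD in Hf as [<-|Hf]; auto. left; apply HD'; auto.
    + intros f Hf. apply HG' in Hf as [<-|Hf]; simpl; auto.
    + intros f Hf. apply HD' in Hf as [<-|Hf]; simpl; auto. left; apply HD; auto.
    + intros p E; discriminate.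
    + intros p E; inversion E; subst; clear E. simpl; split; [auto|split; [|auto]].
      split; simpl; intros y Hy; [destruct Hy as [<-|[]]; exists (Lab x A); split; [left; apply HG'; auto|simpl; auto]|destruct Hy].
    + intros f [Hf|Hf]; destruct Hf as [<-|[]]; simpl; (split; [auto|split; [lia|]]);
        split; simpl; intros y Hy; try destruct Hy as [<-|[]]; try destruct Hy; apply Lo; simpl; auto.
    + intros ? ? ? ? [E|[]]; discriminate.
    + intros a y [E|[]]; discriminate.
  - unfold sRimp in Hs.
    destruct (classic (dA H G (Lab x A))) as [Ha|Ha].
    + right; exists (Lab x B); split; [apply HD'; auto|]. intro Hb; apply Hs; auto.
    + left; exists (Lab x A); split; [apply HG'; auto|auto].
Qed.

Lemma upd_eq f x v : upd f x v x = v.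
Proof. unfold upd; destruct (Nat.eq_dec x x); congruence. Qed.
Lemma upd_neq f x v y : y <> x -> upd f x v y = f y.
Proof. unfold upd; destruct (Nat.eq_dec y x); congruence. Qed.

Lemma r_Rall A0 G D H aw an a A x ctx G' D' :
 InvW A0 G D H aw an ->
 (forall f, In f D <-> FAll a A = f \/ In f ctx) -> ~ occW x G D -> ~ sRall H G D a A ->
 (forall f, In f G' <-> Mem x a = f \/ In f G) ->
 (forall f, In f D' <-> Lab x A = f \/ In f ctx) ->
 InvW A0 G' D' ((G,D)::H) (upd aw x (SAll A :: an a)) an /\ newelt H G D G' D'.
Proof.
  intros I HD Fx Hs HG' HD'.
  assert (Hp : In (FAll a A) D) by (apply HD; auto).
  destruct (old_D _ _ _ _ _ _ _ I Hp) as [Fo [Lv Lo]]; simpl in Fo, Lv.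
  assert (Oa : occN a G D) by (apply (proj2 Lo); simpl; auto).
  destruct (i_N _ _ _ _ _ _ I a Oa) as [Ra [Wa [Sa Da]]].
  assert (newW : forall y, occW y G' D' -> y = x \/ occW y G D).
  { intros y [f [[Hf|Hf] Hy]].
    - apply HG' in Hf as [<-|Hf]; [simpl in Hy; intuition|right; exists f; auto].
    - apply HD' in Hf as [<-|Hf]; [simpl in Hy; intuition|right; exists f; split; auto].
      right; apply HD; auto. }
  assert (newN : forall b, occN b G' D' -> occN b G D).
  { intros y [f [[Hf|Hf] Hy]].
    - apply HG' in Hf as [<-|Hf]; [simpl in Hy; destruct Hy as [<-|[]]; auto|exists f; auto].
    - apply HD' in Hf as [<-|Hf]; [simpl in Hy; destruct Hy|exists f; split; auto].
      right; apply HD; auto. }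
  split.
  - apply frame with (aw := aw) (an := an) (pG := None) (pD := Some (FAll a A)) (nG := [Mem x a]) (nD := [Lab x A]).
    + exact I.
    + intros f Hf; left; apply HG'; auto.
    + intros f Hf; apply HD in Hf as [<-|Hf]; auto. left; apply HD'; auto.
    + intros f Hf; apply HG' in Hf as [<-|Hf]; simpl; auto.
    + intros f Hf; apply HD' in Hf as [<-|Hf]; simpl; auto. left; apply HD; auto.
    + intros; discriminate.
    + intros p E; inversion E; subst; clear E. simpl; split; [auto|split].
      * split; simpl; intros y Hy; [destruct Hy|destruct Hy as [<-|[]]].
        exists (Mem x a); split; [left; apply HG'; auto|simpl; auto].
      * exists x; split; [apply HG'; auto|apply dS_cons; left; apply HD'; auto].
    + intros f [[<-|[]]|[<-|[]]]; simpl; rewrite upd_eq; simpl; split; auto; lia.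
    + intros ? ? ? ? [E|[]]; discriminate.
    + intros b y z Hy Hz. apply HG' in Hy as [E|Hy]; [discriminate|].
      apply HG' in Hz as [E|Hz]; [discriminate|]. eapply (i_own _ _ _ _ _ _ I); eauto.
    + intros y Hy; rewrite upd_neq; auto. intro E; subst; contradiction.
    + auto.
    + intros y Hy Ny. destruct (newW y Hy) as [->|?]; [|contradiction].
      rewrite upd_eq. split; [|split; [|split; [|split]]].
      * right; left. exists A, a. rewrite upd_eq. repeat split; [apply HG'; auto|apply dS_cons; left; apply HD'; auto].
      * simpl; auto.
      * constructor; simpl; auto.
      * simpl; lia.
      * intros z Hz Ez. destruct (Nat.eq_dec z x) as [|Nz]; auto.
        rewrite upd_neq in Ez by auto.
        assert (Oz : occW z G D) by (destruct (newW z Hz); [contradiction|auto]).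
        destruct (i_W _ _ _ _ _ _ I z Oz) as [[E|[[A' [a' [E [Hm Hd]]]]|[A' [a' [E _]]]]] _];
          rewrite Ez in E; try discriminate.
        injection E as -> E.
        assert (a' = a) as ->.
        { apply (i_injN _ _ _ _ _ _ I); auto. exists (Mem z a'); simpl; auto. }
        exfalso; apply Hs; intros _; exists z; auto.
    + intros b Hb Nb; exfalso; apply Nb; auto.
  - left; exists (Mem x a); split; [apply HG'; auto|].
    intro Hd. apply Fx. exists (Mem x a); split; [left; apply (i_pL _ _ _ _ _ _ I); simpl; auto|simpl; auto].
Qed.

Lemma r_Lex A0 G D H aw an a A x ctx G' D' :
 InvW A0 G D H aw an ->
 (forall f, In f G <-> FEx a A = f \/ In f ctx) -> ~ occW x G D -> ~ sLex H G a A ->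
 (forall f, In f G' <-> Mem x a = f \/ Lab x A = f \/ In f ctx) ->
 (forall f, In f D' <-> In f D) ->
 InvW A0 G' D' ((G,D)::H) (upd aw x (SEx A :: an a)) an /\ newelt H G D G' D'.
Proof.
  intros I HG Fx Hs HG' HD'.
  assert (Hp : In (FEx a A) G) by (apply HG; auto).
  destruct (old_G _ _ _ _ _ _ _ I Hp) as [Fo [Lv Lo]]; simpl in Fo, Lv.
  assert (Oa : occN a G D) by (apply (proj2 Lo); simpl; auto).
  destruct (i_N _ _ _ _ _ _ I a Oa) as [Ra [Wa [Sa Da]]].
  assert (newW : forall y, occW y G' D' -> y = x \/ occW y G D).
  { intros y [f [[Hf|Hf] Hy]].
    - apply HG' in Hf as [<-|[<-|Hf]]; [simpl in Hy; intuition|simpl in Hy; intuition|].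
      right; exists f; split; auto. left; apply HG; auto.
    - apply HD' in Hf. right; exists f; auto. }
  assert (newN : forall b, occN b G' D' -> occN b G D).
  { intros y [f [[Hf|Hf] Hy]].
    - apply HG' in Hf as [<-|[<-|Hf]]; [simpl in Hy; destruct Hy as [<-|[]]; auto|simpl in Hy; destruct Hy|].
      exists f; split; auto. left; apply HG; auto.
    - apply HD' in Hf. exists f; auto. }
  split.
  - apply frame with (aw := aw) (an := an) (pG := Some (FEx a A)) (pD := None) (nG := [Mem x a; Lab x A]) (nD := []).
    + exact I.
    + intros f Hf; apply HG in Hf as [<-|Hf]; auto. left; apply HG'; auto.
    + intros f Hf; left; apply HD'; auto.
    + intros f Hf; apply HG' in Hf as [<-|[<-|Hf]]; simpl; auto. left; apply HG; auto.
    + intros f Hf; left; apply HD'; auto.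
    + intros p E; inversion E; subst; clear E. simpl; split; [auto|split].
      * split; simpl; intros y Hy; [destruct Hy|destruct Hy as [<-|[]]].
        exists (Mem x a); split; [left; apply HG'; auto|simpl; auto].
      * exists x; split; [apply HG'; auto|apply dA_cons; left; apply HG'; auto].
    + intros; discriminate.
    + intros f [[<-|[<-|[]]]|[]]; simpl; rewrite upd_eq; simpl; split; auto; lia.
    + intros ? ? ? ? [E|[E|[]]]; discriminate.
    + intros b y z Hy Hz. apply HG' in Hy as [E|[E|Hy]]; try discriminate.
      apply HG' in Hz as [E|[E|Hz]]; try discriminate. eapply (i_own _ _ _ _ _ _ I); apply HG; eauto.
    + intros y Hy; rewrite upd_neq; auto. intro E; subst; contradiction.
    + auto.
    + intros y Hy Ny. destruct (newW y Hy) as [->|?]; [|contradiction].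
      rewrite upd_eq. split; [|split; [|split; [|split]]].
      * right; right. exists A, a. rewrite upd_eq. repeat split; [apply HG'; auto|apply dA_cons; left; apply HG'; auto].
      * simpl; auto.
      * constructor; simpl; auto.
      * simpl; lia.
      * intros z Hz Ez. destruct (Nat.eq_dec z x) as [|Nz]; auto.
        rewrite upd_neq in Ez by auto.
        assert (Oz : occW z G D) by (destruct (newW z Hz); [contradiction|auto]).
        destruct (i_W _ _ _ _ _ _ I z Oz) as [[E|[[A' [a' [E _]]]|[A' [a' [E [Hm Hd]]]]]] _];
          rewrite Ez in E; try discriminate.
        injection E as -> E.
        assert (a' = a) as ->.
        { apply (i_injN _ _ _ _ _ _ I); auto. exists (Mem z a'); simpl; auto. }
        exfalso; apply Hs; intros _; exists z; auto.
    + intros b Hb Nb; exfalso; apply Nb; auto.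
  - left; exists (Mem x a); split; [apply HG'; auto|].
    intro Hd. apply Fx. exists (Mem x a); split; [left; apply (i_pL _ _ _ _ _ _ I); simpl; auto|simpl; auto].
Qed.

Lemma r_Rcnd A0 G D H aw an x A B a ctx G' D' :
 InvW A0 G D H aw an ->
 (forall f, In f D <-> Lab x (Cnd A B) = f \/ In f ctx) -> ~ occN a G D -> ~ sRcnd H G D x A B ->
 (forall f, In f G' <-> InN a x = f \/ FEx a A = f \/ In f G) ->
 (forall f, In f D' <-> FCnd x a A B = f \/ In f ctx) ->
 InvW A0 G' D' ((G,D)::H) aw (upd an a (SR A B :: aw x)) /\ newelt H G D G' D'.
Proof.
  intros I HD Fa Hs HG' HD'.
  assert (Hp : In (Lab x (Cnd A B)) D) by (apply HD; auto).
  destruct (old_D _ _ _ _ _ _ _ I Hp) as [Fo [Lv Lo]]; simpl in Fo, Lv.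
  destruct (sc_Cnd _ _ _ Fo) as [FA [FB FI]].
  assert (Ox : occW x G D) by (apply (proj1 Lo); simpl; auto).
  destruct (i_W _ _ _ _ _ _ I x Ox) as [Rx [Wx [Sx Dx]]].
  assert (newW : forall y, occW y G' D' -> occW y G D).
  { intros y [f [[Hf|Hf] Hy]].
    - apply HG' in Hf as [<-|[<-|Hf]]; simpl in Hy; [destruct Hy as [<-|[]]; auto|destruct Hy|].
      exists f; auto.
    - apply HD' in Hf as [<-|Hf]; simpl in Hy; [destruct Hy as [<-|[]]; auto|].
      exists f; split; auto. right; apply HD; auto. }
  assert (newN : forall b, occN b G' D' -> b = a \/ occN b G D).
  { intros y [f [[Hf|Hf] Hy]].
    - apply HG' in Hf as [<-|[<-|Hf]]; simpl in Hy; [intuition|intuition|].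
      right; exists f; auto.
    - apply HD' in Hf as [<-|Hf]; simpl in Hy; [intuition|].
      right; exists f; split; auto. right; apply HD; auto. }
  split.
  - apply frame with (aw := aw) (an := an) (pG := None) (pD := Some (Lab x (Cnd A B)))
      (nG := [InN a x; FEx a A]) (nD := [FCnd x a A B]).
    + exact I.
    + intros f Hf; left; apply HG'; auto.
    + intros f Hf; apply HD in Hf as [<-|Hf]; auto. left; apply HD'; auto.
    + intros f Hf; apply HG' in Hf as [<-|[<-|Hf]]; simpl; auto.
    + intros f Hf; apply HD' in Hf as [<-|Hf]; simpl; auto. left; apply HD; auto.
    + intros; discriminate.
    + intros p E; inversion E; subst; clear E. simpl; split; [auto|split].
      * split; simpl; intros y Hy; [destruct Hy as [<-|[]]|destruct Hy].
        exists (InN a x); split; [left; apply HG'; auto|simpl; auto].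
      * exists a; split; [apply HG'; auto|split; [apply dA_cons; left; apply HG'; auto|apply HD'; auto]].
    + intros f [[<-|[<-|[]]]|[<-|[]]]; simpl; try rewrite upd_eq; simpl; split; auto; lia.
    + intros ? ? ? ? [E|[E|[]]]; discriminate.
    + intros b y z Hy Hz. apply HG' in Hy as [Ey|[E|Hy]]; try discriminate;
        apply HG' in Hz as [Ez|[E|Hz]]; try discriminate.
      * congruence.
      * injection Ey as E1 E2; subst b y. exfalso; apply Fa; exists (InN a z); simpl; auto.
      * injection Ez as E1 E2; subst b z. exfalso; apply Fa; exists (InN a y); simpl; auto.
      * eapply (i_own _ _ _ _ _ _ I); eauto.
    + auto.
    + intros b Hb; rewrite upd_neq; auto. intro E; subst; contradiction.
    + intros y Hy Ny; exfalso; auto.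
    + intros b Hb Nb. destruct (newN b Hb) as [->|?]; [|contradiction].
      rewrite upd_eq. split; [|split; [|split; [|split]]].
      * left. exists A, B, x. rewrite upd_eq. repeat split; [apply HG'; auto|apply dA_cons; left; apply HG'; auto|apply HD'; auto].
      * simpl; auto.
      * constructor; simpl; auto.
      * simpl; lia.
      * intros c Hc Ec. destruct (Nat.eq_dec c a) as [|Nc]; auto.
        rewrite upd_neq in Ec by auto.
        assert (Oc : occN c G D) by (destruct (newN c Hc); [contradiction|auto]).
        destruct (i_N _ _ _ _ _ _ I c Oc) as [[[A' [B' [x' [E [Hi [He Hf]]]]]]|[A' [B' [b' [x' [E _]]]]]] _];
          rewrite Ec in E; try discriminate.
        injection E as -> -> E.
        assert (x' = x) as ->.
        { apply (i_injW _ _ _ _ _ _ I); auto. exists (InN c x'); simpl; auto. }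
        exfalso; apply Hs; intros _; exists c; auto.
  - left; exists (InN a x); split; [apply HG'; auto|].
    intro Hd. apply Fa. exists (InN a x); split; [left; apply (i_pL _ _ _ _ _ _ I); simpl; auto|simpl; auto].
Qed.

Lemma chain_all A0 G D H aw an :
  InvW A0 G D H aw an ->
  (forall b a F, In (Sub b a) G -> In (FAll a F) G -> In (FAll b F) G) ->
  forall n c, length (an c) <= n -> occN c G D -> forall A B, In (A,B) (chainL (an c)) ->
  In (FAll c (Imp A B)) G.
Proof.
  intros I Mon n. induction n as [|n IH]; intros c Hl Oc A B Hin;
  destruct (i_N _ _ _ _ _ _ I c Oc) as [[[A' [B' [x' [E _]]]]|[A' [B' [b [x' [E [H1 [H2 [H3 [H4 H5]]]]]]]]]] _];
  rewrite E in Hin, Hl; simpl in Hin, Hl; try lia; try contradiction.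
  destruct Hin as [E'|Hin]; [injection E' as -> ->; auto|].
  apply Mon with b; auto. apply IH; auto; [lia|]. exists (Sub c b); simpl; auto.
Qed.

Lemma r_Lbar A0 G D H aw an x a A B c ctx G' D' :
 InvW A0 G D H aw an ->
 (forall f, In f G <-> FCnd x a A B = f \/ In f ctx) -> ~ occN c G D -> ~ sLbar H G x a A B ->
 (forall b a F, In (Sub b a) G -> In (FAll a F) G -> In (FAll b F) G) ->
 (forall b, occN b G D -> In (Sub b b) G) ->
 (forall f, In f G' <-> InN c x = f \/ Sub c a = f \/ FEx c A = f \/ FAll c (Imp A B) = f \/ In f ctx) ->
 (forall f, In f D' <-> In f D) ->
 InvW A0 G' D' ((G,D)::H) aw (upd an c (SL A B :: an a)) /\ newelt H G D G' D'.
Proof.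
  intros I HG Fc Hs Mon Ref HG' HD'.
  assert (Hp : In (FCnd x a A B) G) by (apply HG; auto).
  destruct (old_G _ _ _ _ _ _ _ I Hp) as [Fo [Lv Lo]]; simpl in Fo, Lv.
  destruct (sc_Cnd _ _ _ Fo) as [FA [FB FI]].
  destruct (i_cnd _ _ _ _ _ _ I x a A B (dA_here _ _ _ Hp)) as [Hax Hea].
  destruct (old_G _ _ _ _ _ _ _ I Hax) as [_ [Lax _]]; simpl in Lax.
  assert (Ox : occW x G D) by (apply (proj1 Lo); simpl; auto).
  assert (Oa : occN a G D) by (apply (proj2 Lo); simpl; auto).
  destruct (i_N _ _ _ _ _ _ I a Oa) as [Ra [Wa [Sa Da]]].
  assert (Hac : a <> c) by (intro; subst; contradiction).
  assert (Hax' : In (InN a x) ctx).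
  { apply HG in Hax as [E|?]; [discriminate|auto]. }
  assert (Nch : ~ In (A,B) (chainL (an a))).
  { intro Hin. apply Hs; intros _. exists a; repeat split; auto.
    eapply chain_all; eauto. }
  assert (newW : forall y, occW y G' D' -> occW y G D).
  { intros y [f [[Hf|Hf] Hy]].
    - apply HG' in Hf as [<-|[<-|[<-|[<-|Hf]]]]; simpl in Hy;
        [destruct Hy as [<-|[]]; auto|destruct Hy|destruct Hy|destruct Hy|].
      exists f; split; auto. left; apply HG; auto.
    - apply HD' in Hf. exists f; auto. }
  assert (newN : forall b, occN b G' D' -> b = c \/ occN b G D).
  { intros y [f [[Hf|Hf] Hy]].
    - apply HG' in Hf as [<-|[<-|[<-|[<-|Hf]]]]; simpl in Hy; try solve [intuition (subst; auto)].
      right; exists f; split; auto. left; apply HG; auto.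
    - apply HD' in Hf. right; exists f; auto. }
  split.
  - apply frame with (aw := aw) (an := an) (pG := Some (FCnd x a A B)) (pD := None)
      (nG := [InN c x; Sub c a; FEx c A; FAll c (Imp A B)]) (nD := []).
    + exact I.
    + intros f Hf; apply HG in Hf as [<-|Hf]; auto. left; apply HG'; tauto.
    + intros f Hf; left; apply HD'; auto.
    + intros f Hf; apply HG' in Hf as [<-|[<-|[<-|[<-|Hf]]]]; simpl; try tauto. left; apply HG; auto.
    + intros f Hf; left; apply HD'; auto.
    + intros p E; inversion E; subst; clear E. simpl; split; [auto|split].
      * split; simpl; intros y Hy; destruct Hy as [<-|[]].
        -- exists (InN c x); split; [left; apply HG'; auto|simpl; auto].
        -- exists (Sub c a); split; [left; apply HG'; auto|simpl; auto].
      * exists c; repeat split; try (apply HG'; tauto). apply dA_cons; left; apply HG'; tauto.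
    + intros; discriminate.
    + intros f [[<-|[<-|[<-|[<-|[]]]]]|[]]; simpl; try rewrite upd_eq; try rewrite (upd_neq _ c _ a Hac);
        simpl; split; auto; lia.
    + intros ? ? ? ? [E|[E|[E|[E|[]]]]]; discriminate.
    + intros b y z Hy Hz. apply HG' in Hy as [Ey|[E|[E|[E|Hy]]]]; try discriminate;
        apply HG' in Hz as [Ez|[E|[E|[E|Hz]]]]; try discriminate.
      * congruence.
      * injection Ey as E1 E2; subst b y. exfalso; apply Fc; exists (InN c z); split; [left; apply HG; auto|simpl; auto].
      * injection Ez as E1 E2; subst b z. exfalso; apply Fc; exists (InN c y); split; [left; apply HG; auto|simpl; auto].
      * eapply (i_own _ _ _ _ _ _ I); apply HG; eauto.
    + auto.
    + intros b Hb; rewrite upd_neq; auto. intro E; subst; contradiction.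
    + intros y Hy Ny; exfalso; auto.
    + intros b Hb Nb. destruct (newN b Hb) as [->|?]; [|contradiction].
      rewrite upd_eq. split; [|split; [|split; [|split]]].
      * right. exists A, B, a, x. rewrite upd_eq, (upd_neq _ c _ a Hac).
        repeat split; try (apply HG'; tauto). apply dA_cons; left; apply HG'; tauto.
      * simpl; auto.
      * constructor; simpl; auto.
      * simpl; lia.
      * intros b' Hb' Eb. destruct (Nat.eq_dec b' c) as [|Nb']; auto.
        rewrite upd_neq in Eb by auto.
        assert (Ob : occN b' G D) by (destruct (newN b' Hb'); [contradiction|auto]).
        destruct (i_N _ _ _ _ _ _ I b' Ob) as [[[A' [B' [x' [E _]]]]|[A' [B' [b'' [x' [E [H1 [H2 [H3 [H4 H5]]]]]]]]]] _];
          rewrite Eb in E; try discriminate.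
        injection E as -> -> E.
        assert (b'' = a) as ->.
        { apply (i_injN _ _ _ _ _ _ I); auto. exists (Sub b' b''); simpl; auto. }
        assert (x' = x) as -> by (eapply (i_own _ _ _ _ _ _ I); eauto).
        exfalso; apply Hs; intros _; exists b'; auto.
  - left; exists (InN c x); split; [apply HG'; auto|].
    intro Hd. apply Fc. exists (InN c x); split; [left; apply (i_pL _ _ _ _ _ _ I); simpl; auto|simpl; auto].
Qed.

Lemma Forall2_sp_refl Q : Forall2 seq_perm Q Q.
Proof. induction Q; constructor; auto. split; apply Permutation_refl. Qed.

Ltac pm P := intros ?f; split; intros ?Hf;
  [apply (Permutation_in _ P) in Hf | apply (Permutation_in _ (Permutation_sym P))]; simpl in *; tauto.

Lemma step_inv A0 G D H aw an r Q G' D' S'' :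
 InvW A0 G D H aw an -> rapp H G D r Q -> priority_ok H (G,D) r -> In S'' Q -> seq_perm (G',D') S'' ->
 (exists aw' an', InvW A0 G' D' ((G,D)::H) aw' an') /\ newelt H G D G' D'.
Proof.
  intros I Hr Hpr HQ [PG PD]. simpl in PG, PD.
  destruct Hr; simpl in HQ;
  repeat (destruct HQ as [<-|HQ]; [simpl in PG, PD|]); try contradiction.
  - destruct (r_Land A0 G D H aw an x A B ctx G' D' I (perm_in G _ _ ltac:(eassumption)) ltac:(assumption)) as [I' N]; [pm PG|pm PD|].
    split; [exists aw, an|]; auto.
  - destruct (r_Rand A0 G D H aw an x A B ctx A G' D' I (perm_in D _ _ ltac:(eassumption)) (or_introl eq_refl) ltac:(assumption)) as [I' N]; [pm PG|pm PD|].
    split; [exists aw, an|]; auto.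
  - destruct (r_Rand A0 G D H aw an x A B ctx B G' D' I (perm_in D _ _ ltac:(eassumption)) (or_intror eq_refl) ltac:(assumption)) as [I' N]; [pm PG|pm PD|].
    split; [exists aw, an|]; auto.
  - destruct (r_Lor A0 G D H aw an x A B ctx A G' D' I (perm_in G _ _ ltac:(eassumption)) (or_introl eq_refl) ltac:(assumption)) as [I' N]; [pm PG|pm PD|].
    split; [exists aw, an|]; auto.
  - destruct (r_Lor A0 G D H aw an x A B ctx B G' D' I (perm_in G _ _ ltac:(eassumption)) (or_intror eq_refl) ltac:(assumption)) as [I' N]; [pm PG|pm PD|].
    split; [exists aw, an|]; auto.
  - destruct (r_Ror A0 G D H aw an x A B ctx G' D' I (perm_in D _ _ ltac:(eassumption)) ltac:(assumption)) as [I' N]; [pm PG|pm PD|].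
    split; [exists aw, an|]; auto.
  - destruct (r_Limp1 A0 G D H aw an x A B ctx G' D' I (perm_in G _ _ ltac:(eassumption)) ltac:(assumption)) as [I' N]; [pm PG|pm PD|].
    split; [exists aw, an|]; auto.
  - destruct (r_Limp2 A0 G D H aw an x A B ctx G' D' I (perm_in G _ _ ltac:(eassumption)) ltac:(assumption)) as [I' N]; [pm PG|pm PD|].
    split; [exists aw, an|]; auto.
  - destruct (r_Rimp A0 G D H aw an x A B ctx G' D' I (perm_in D _ _ ltac:(eassumption)) ltac:(assumption)) as [I' N]; [pm PG|pm PD|].
    split; [exists aw, an|]; auto.
  - destruct (r_Lall A0 G D H aw an x a A G' D' I ltac:(assumption) ltac:(assumption) ltac:(assumption)) as [I' N]; [pm PG|pm PD|].
    split; [exists aw, an|]; auto.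
  - destruct (r_Rall A0 G D H aw an a A x ctx G' D' I (perm_in D _ _ ltac:(eassumption)) ltac:(assumption) ltac:(assumption)) as [I' N]; [pm PG|pm PD|].
    split; [eexists; eexists; exact I'|]; auto.
  - destruct (r_Lex A0 G D H aw an a A x ctx G' D' I (perm_in G _ _ ltac:(eassumption)) ltac:(assumption) ltac:(assumption)) as [I' N]; [pm PG|pm PD|].
    split; [eexists; eexists; exact I'|]; auto.
  - destruct (r_Rex A0 G D H aw an x a A G' D' I ltac:(assumption) ltac:(assumption) ltac:(assumption)) as [I' N]; [pm PG|pm PD|].
    split; [exists aw, an|]; auto.
  - destruct (r_Rcnd A0 G D H aw an x A B a ctx G' D' I (perm_in D _ _ ltac:(eassumption)) ltac:(assumption) ltac:(assumption)) as [I' N]; [pm PG|pm PD|].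
    split; [eexists; eexists; exact I'|]; auto.
  - destruct (r_Lcnd1 A0 G D H aw an a x A B G' D' I ltac:(assumption) ltac:(assumption) ltac:(assumption)) as [I' N]; [pm PG|pm PD|].
    split; [exists aw, an|]; auto.
  - destruct (r_Lcnd2 A0 G D H aw an a x A B G' D' I ltac:(assumption) ltac:(assumption) ltac:(assumption)) as [I' N]; [pm PG|pm PD|].
    split; [exists aw, an|]; auto.
  - destruct (r_Rbar1 A0 G D H aw an c x a A B G' D' I ltac:(assumption) ltac:(assumption) ltac:(assumption) ltac:(assumption)) as [I' N]; [pm PG|pm PD|].
    split; [exists aw, an|]; auto.
  - destruct (r_Rbar2 A0 G D H aw an c x a A B G' D' I ltac:(assumption) ltac:(assumption) ltac:(assumption) ltac:(assumption)) as [I' N]; [pm PG|pm PD|].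
    split; [exists aw, an|]; auto.
  - simpl in Hpr.
    assert (Mon : forall b a F, In (Sub b a) G -> In (FAll a F) G -> In (FAll b F) G).
    { intros b a' F Hs1 Hs2. apply NNPP; intro Hn. apply (Hpr RMon).
      - unfold dynamic; intuition discriminate.
      - exists [(FAll b F :: G, D)], [(FAll b F :: G, D)]; split; [|apply Forall2_sp_refl].
        apply ap_Mon with a'; auto. }
    assert (Ref : forall b, occN b G D -> In (Sub b b) G).
    { intros b Hb. apply NNPP; intro Hn. apply (Hpr RRef).
      - unfold dynamic; intuition discriminate.
      - exists [(Sub b b :: G, D)], [(Sub b b :: G, D)]; split; [|apply Forall2_sp_refl].
        apply ap_Ref. unfold sRef; intro Hm; apply Hn; auto. }
    destruct (r_Lbar A0 G D H aw an x a A B c ctx G' D' I (perm_in G _ _ ltac:(eassumption)) ltac:(assumption) ltac:(assumption) Mon Ref) as [I' N]; [pm PG|pm PD|].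
    split; [eexists; eexists; exact I'|]; auto.
  - destruct (r_Ref A0 G D H aw an a G' D' I ltac:(assumption)) as [I' N]; [pm PG|pm PD|].
    split; [exists aw, an|]; auto.
  - destruct (r_Tr A0 G D H aw an a b c G' D' I ltac:(assumption) ltac:(assumption) ltac:(assumption)) as [I' N]; [pm PG|pm PD|].
    split; [exists aw, an|]; auto.
  - destruct (r_Lsub A0 G D H aw an x a b G' D' I ltac:(assumption) ltac:(assumption) ltac:(assumption)) as [I' N]; [pm PG|pm PD|].
    split; [exists aw, an|]; auto.
  - destruct (r_Mon A0 G D H aw an b a A G' D' I ltac:(assumption) ltac:(assumption) ltac:(assumption)) as [I' N]; [pm PG|pm PD|].
    split; [exists aw, an|]; auto.
Qed.

Definition alph (Sc : list formula) : list step :=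
  map SAll Sc ++ map SEx Sc ++ map (fun p => SR (fst p) (snd p)) (list_prod Sc Sc)
  ++ map (fun p => SL (fst p) (snd p)) (list_prod Sc Sc).

Lemma stepOK_alph Sc s : stepOK Sc s -> In s (alph Sc).
Proof.
  unfold alph; destruct s; simpl; intros Hs; rewrite !in_app_iff.
  - left; apply in_map; auto.
  - right; left; apply in_map; auto.
  - right; right; left. apply in_map_iff. exists (A,B); split; auto. apply in_prod; tauto.
  - right; right; right. apply in_map_iff. exists (A,B); split; auto. apply in_prod; tauto.
Qed.

Fixpoint enumL (al : list step) (n : nat) : list (list step) :=
  match n with
  | 0 => [[]]
  | S n => [] :: flat_map (fun s => map (cons s) (enumL al n)) al
  end.

Lemma in_enumL al n p : length p <= n -> Forall (fun s => In s al) p -> In p (enumL al n).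
Proof.
  revert p; induction n as [|n IH]; intros p Hl Hf.
  - destruct p; simpl in *; [auto|lia].
  - destruct p as [|s p]; simpl; [auto|right].
    inversion Hf; subst. apply in_flat_map. exists s; split; auto.
    apply in_map. apply IH; auto. simpl in Hl; lia.
Qed.

Lemma chain_nodup p : wf false p -> NoDup (chainL p).
Proof.
  induction p as [|s p IH]; simpl; intros W; [constructor|].
  destruct s; simpl in *; [constructor|constructor|constructor|].
  destruct W as [_ [W N]]. constructor; auto.
Qed.

Lemma chain_incl Sc p : Forall (stepOK Sc) p -> incl (chainL p) (list_prod Sc Sc).
Proof.
  induction p as [|s p IH]; simpl; intros F; [intros ? []|].
  inversion F; subst. destruct s; simpl; [intros ? []|intros ? []|intros ? []|].
  intros y [<-|Hy]; [apply in_prod; simpl in *; tauto|apply IH; auto].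
Qed.

Lemma chain_len Sc p : Forall (stepOK Sc) p -> wf false p -> length (chainL p) <= length Sc * length Sc.
Proof.
  intros F W. rewrite <- length_prod. apply NoDup_incl_length; [apply chain_nodup; auto|apply chain_incl; auto].
Qed.

Lemma wf_len Sc p : Forall (stepOK Sc) p -> forall w, wf w p ->
  length p <= wd p * (length Sc * length Sc + 2) + (if w then 0 else S (length (chainL p))).
Proof.
  induction p as [|s p IH]; intros F w W.
  - simpl in *; subst; simpl; lia.
  - inversion F; subst. destruct s; simpl in W |- *.
    + destruct W as [-> W]. specialize (IH H2 false W). pose proof (chain_len _ _ H2 W). simpl in IH; lia.
    + destruct W as [-> W]. specialize (IH H2 false W). pose proof (chain_len _ _ H2 W). simpl in IH; lia.
    + destruct W as [-> W]. specialize (IH H2 true W). simpl in IH; lia.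
    + destruct W as [-> [W _]]. specialize (IH H2 false W). simpl in IH; lia.
Qed.

Lemma addr_len Sc M p w : Forall (stepOK Sc) p -> wf w p -> wd p <= M ->
  length p <= (M + 1) * (length Sc * length Sc + 2).
Proof.
  intros F W Hd. pose proof (wf_len Sc p F w W) as Hl.
  assert (S (length (chainL p)) <= length Sc * length Sc + 2 \/ w = true).
  { destruct w; [right; auto|left]. pose proof (chain_len _ _ F W); lia. }
  assert (wd p * (length Sc * length Sc + 2) <= M * (length Sc * length Sc + 2)) by (apply Nat.mul_le_mono_r; auto).
  destruct w; lia.
Qed.

Inductive alf :=
  | aInN (a x : list step) | aMem (x a : list step) | aSub (a b : list step)
  | aLab (x : list step) (F : formula) | aFEx (a : list step) (F : formula)
  | aFAll (a : list step) (F : formula) | aFCnd (x a : list step) (A B : formula).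

Definition alpha (aw an : nat -> list step) (f : lform) : alf :=
  match f with
  | InN a x => aInN (an a) (aw x)
  | Mem x a => aMem (aw x) (an a)
  | Sub a b => aSub (an a) (an b)
  | Lab x F => aLab (aw x) F
  | FEx a F => aFEx (an a) F
  | FAll a F => aFAll (an a) F
  | FCnd x a A B => aFCnd (aw x) (an a) A B
  end.

Definition Eset (A0 : formula) : list (list step) :=
  enumL (alph (sc A0)) ((cd A0 + 1) * (length (sc A0) * length (sc A0) + 2)).

Definition Uset (A0 : formula) : list alf :=
  let E := Eset A0 in let Sc := sc A0 in
  flat_map (fun p => flat_map (fun q => [aInN p q; aMem p q; aSub p q]) E) E
  ++ flat_map (fun p => flat_map (fun F => [aLab p F; aFEx p F; aFAll p F]) Sc) E
  ++ flat_map (fun p => flat_map (fun q => flat_map (fun A => map (aFCnd p q A) Sc) Sc) E) E.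

Lemma in_Eset A0 p w : Forall (stepOK (sc A0)) p -> wf w p -> wd p <= cd A0 -> In p (Eset A0).
Proof.
  intros F W D. apply in_enumL. eapply addr_len; eauto.
  eapply Forall_impl; [|exact F]. intros; apply stepOK_alph; auto.
Qed.

Lemma alpha_in A0 G D H aw an f : InvW A0 G D H aw an -> dA H G f \/ dS H D f ->
  In (alpha aw an f) (Uset A0).
Proof.
  intros I Hf. destruct (i_lab _ _ _ _ _ _ I f Hf) as [Lw Ln].
  destruct (i_fok _ _ _ _ _ _ I f Hf) as [Fo _].
  assert (EW : forall x, In x (wlabs f) -> In (aw x) (Eset A0)).
  { intros x Hx. destruct (i_W _ _ _ _ _ _ I x (Lw x Hx)) as [_ [W [S Dd]]]. eapply in_Eset; eauto. }
  assert (EN : forall a, In a (nlabs f) -> In (an a) (Eset A0)).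
  { intros a Ha. destruct (i_N _ _ _ _ _ _ I a (Ln a Ha)) as [_ [W [S Dd]]]. eapply in_Eset; eauto. }
  unfold Uset; destruct f; simpl in *; rewrite !in_app_iff.
  - left; apply in_flat_map; exists (an a); split; auto.
    apply in_flat_map; exists (aw x); split; simpl; auto.
  - left; apply in_flat_map; exists (aw x); split; auto.
    apply in_flat_map; exists (an a); split; simpl; auto.
  - left; apply in_flat_map; exists (an a); split; auto.
    apply in_flat_map; exists (an b); split; simpl; auto.
  - right; left; apply in_flat_map; exists (aw x); split; auto.
    apply in_flat_map; exists A; split; simpl; auto.
  - right; left; apply in_flat_map; exists (an a); split; auto.
    apply in_flat_map; exists A; split; simpl; auto.
  - right; left; apply in_flat_map; exists (an a); split; auto.
    apply in_flat_map; exists A; split; simpl; auto.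
  - right; right; apply in_flat_map; exists (aw x); split; auto.
    apply in_flat_map; exists (an a); split; auto.
    destruct (sc_Cnd _ _ _ Fo) as [FA [FB _]].
    apply in_flat_map; exists A; split; auto. apply in_map; auto.
Qed.

Lemma alpha_inj A0 G D H aw an f g : InvW A0 G D H aw an ->
  dA H G f \/ dS H D f -> dA H G g \/ dS H D g -> alpha aw an f = alpha aw an g -> f = g.
Proof.
  intros I Hf Hg E. destruct (i_lab _ _ _ _ _ _ I f Hf) as [Lw Ln].
  destruct (i_lab _ _ _ _ _ _ I g Hg) as [Lw' Ln'].
  assert (IW : forall x y, In x (wlabs f) -> In y (wlabs g) -> aw x = aw y -> x = y).
  { intros; apply (i_injW _ _ _ _ _ _ I); auto. }
  assert (IN : forall x y, In x (nlabs f) -> In y (nlabs g) -> an x = an y -> x = y).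
  { intros; apply (i_injN _ _ _ _ _ _ I); auto. }
  destruct f, g; simpl in E; try discriminate; injection E; intros; subst;
    simpl in IW, IN; f_equal; try (apply IW; auto; fail); try (apply IN; auto; fail);
    try (apply IN; simpl; auto; fail).
Qed.

Lemma NoDup_map_on {X Y} (h : X -> Y) (l : list X) :
  NoDup l -> (forall x y, In x l -> In y l -> h x = h y -> x = y) -> NoDup (map h l).
Proof.
  induction l as [|a l IH]; simpl; intros N Hi; constructor.
  - intros Hin. apply in_map_iff in Hin as [y [E Hy]]. inversion N; subst.
    assert (y = a) by (apply Hi; auto). subst; contradiction.
  - inversion N; subst; apply IH; auto.
Qed.

Definition mu (B : list sequent) : nat :=
  length (nodup lform_eq_dec (flat_map fst B)) + length (nodup lform_eq_dec (flat_map snd B)).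

Lemma in_fm_fst G D H f : In f (flat_map fst ((G,D)::H)) <-> dA H G f.
Proof.
  simpl; rewrite in_app_iff, in_flat_map; unfold dA; tauto.
Qed.
Lemma in_fm_snd G D H f : In f (flat_map snd ((G,D)::H)) <-> dS H D f.
Proof.
  simpl; rewrite in_app_iff, in_flat_map; unfold dS; tauto.
Qed.

Lemma mu_bound A0 G D H aw an : InvW A0 G D H aw an -> mu ((G,D)::H) <= 2 * length (Uset A0).
Proof.
  intros I. unfold mu.
  assert (Hb : forall l, NoDup l -> (forall f, In f l -> dA H G f \/ dS H D f) -> length l <= length (Uset A0)).
  { intros l N Hl. rewrite <- (length_map (alpha aw an)). apply NoDup_incl_length.
    - apply NoDup_map_on; auto. intros; eapply alpha_inj; eauto.
    - intros y Hy; apply in_map_iff in Hy as [f [<- Hf]]. eapply alpha_in; eauto. }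
  assert (length (nodup lform_eq_dec (flat_map fst ((G,D)::H))) <= length (Uset A0)).
  { apply Hb; [apply NoDup_nodup|]. intros f Hf; left; apply nodup_In in Hf; apply in_fm_fst in Hf; auto. }
  assert (length (nodup lform_eq_dec (flat_map snd ((G,D)::H))) <= length (Uset A0)).
  { apply Hb; [apply NoDup_nodup|]. intros f Hf; right; apply nodup_In in Hf; apply in_fm_snd in Hf; auto. }
  lia.
Qed.

Lemma nodup_le (l1 l2 : list lform) : incl l1 l2 ->
  length (nodup lform_eq_dec l1) <= length (nodup lform_eq_dec l2).
Proof.
  intros Hi. apply NoDup_incl_length; [apply NoDup_nodup|].
  intros y Hy; apply nodup_In; apply nodup_In in Hy; auto.
Qed.

Lemma nodup_lt (l1 l2 : list lform) y : incl l1 l2 -> In y l2 -> ~ In y l1 ->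
  length (nodup lform_eq_dec l1) < length (nodup lform_eq_dec l2).
Proof.
  intros Hi Hy Hn. change (length (y :: nodup lform_eq_dec l1) <= length (nodup lform_eq_dec l2)).
  apply NoDup_incl_length.
  - constructor; [rewrite nodup_In; auto|apply NoDup_nodup].
  - intros z [<-|Hz]; apply nodup_In; auto. apply nodup_In in Hz; auto.
Qed.

Lemma mu_incr G D H G' D' : newelt H G D G' D' -> mu ((G',D')::(G,D)::H) > mu ((G,D)::H).
Proof.
  unfold mu. intros [[f [Hf Hn]]|[f [Hf Hn]]].
  - assert (length (nodup lform_eq_dec (flat_map fst ((G,D)::H))) <
            length (nodup lform_eq_dec (flat_map fst ((G',D')::(G,D)::H)))).
    { apply nodup_lt with f.
      - intros z Hz; simpl; apply in_app_iff; right; exact Hz.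
      - simpl; apply in_app_iff; auto.
      - rewrite in_fm_fst; auto. }
    assert (length (nodup lform_eq_dec (flat_map snd ((G,D)::H))) <=
            length (nodup lform_eq_dec (flat_map snd ((G',D')::(G,D)::H)))).
    { apply nodup_le. intros z Hz; change (In z (D' ++ flat_map snd ((G,D)::H))); apply in_app_iff; auto. }
    lia.
  - assert (length (nodup lform_eq_dec (flat_map snd ((G,D)::H))) <
            length (nodup lform_eq_dec (flat_map snd ((G',D')::(G,D)::H)))).
    { apply nodup_lt with f.
      - intros z Hz; simpl; apply in_app_iff; right; exact Hz.
      - simpl; apply in_app_iff; auto.
      - rewrite in_fm_snd; auto. }
    assert (length (nodup lform_eq_dec (flat_map fst ((G,D)::H))) <=
            length (nodup lform_eq_dec (flat_map fst ((G',D')::(G,D)::H)))).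
    { apply nodup_le. intros z Hz; change (In z (G' ++ flat_map fst ((G,D)::H))); apply in_app_iff; auto. }
    lia.
Qed.

Lemma root_inv A0 x0 : InvB A0 [root x0 A0].
Proof.
  simpl. exists (fun _ => []), (fun _ => []).
  assert (dA0 : forall f, ~ dA [] [] f) by (intros f [[]|[S [[] _]]]).
  assert (dS0 : forall f, dS [] [Lab x0 A0] f -> f = Lab x0 A0) by (intros f [[<-|[]]|[S [[] _]]]; auto).
  assert (oW : forall x, occW x [] [Lab x0 A0] -> x = x0).
  { intros x [f [[[]|[<-|[]]] Hx]]; simpl in Hx; intuition. }
  assert (oN : forall a, ~ occN a [] [Lab x0 A0]).
  { intros a [f [[[]|[<-|[]]] Hx]]; simpl in Hx; auto. }
  constructor.
  - intros f Hf; exfalso; eapply dA0; eauto.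
  - intros f Hf; apply dS0 in Hf; subst; simpl; tauto.
  - intros f [Hf|Hf]; [exfalso; eapply dA0; eauto|]. apply dS0 in Hf; subst.
    split; simpl; intros y Hy; [destruct Hy as [<-|[]]|destruct Hy].
    exists (Lab x0 A0); simpl; auto.
  - intros f [Hf|Hf]; [exfalso; eapply dA0; eauto|]. apply dS0 in Hf; subst.
    simpl; split; [apply sc_self|lia].
  - intros f Hf; exfalso; eapply dA0; eauto.
  - intros f Hf; left; apply dS0 in Hf; subst; simpl; auto.
  - intros x a A B Hf; exfalso; eapply dA0; eauto.
  - intros a x y [].
  - intros x y Hx Hy _. rewrite (oW x Hx), (oW y Hy); auto.
  - intros a b Ha; exfalso; eapply oN; eauto.
  - intros x Hx. split; [left; auto|]. simpl; repeat split; auto; lia.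
  - intros a Ha; exfalso; eapply oN; eauto.
Qed.

Lemma Forall2_in_l {X Y} (R : X -> Y -> Prop) P Q x : Forall2 R P Q -> In x P -> exists y, In y Q /\ R x y.
Proof.
  induction 1; simpl; intros Hx; [contradiction|].
  destruct Hx as [<-|Hx]; [exists y; auto|]. destruct (IHForall2 Hx) as [z [? ?]]; exists z; auto.
Qed.

Lemma sstep_inv A0 B S' : InvB A0 B -> sstep B S' -> InvB A0 (S' :: B) /\ mu (S' :: B) > mu B.
Proof.
  destruct B as [|[G D] H]; simpl; [contradiction|].
  intros [aw [an I]] [Ni [r [P [[Q [Hr HF]] [Hpr HP]]]]].
  destruct (Forall2_in_l _ _ _ _ HF HP) as [S'' [HS'' Hsp]].
  destruct S' as [G' D'].
  destruct (step_inv A0 G D H aw an r Q G' D' S'' I Hr Hpr HS'' Hsp) as [I' N].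
  split; [exact I'|]. apply mu_incr; auto.
Qed.

Lemma InvB_bound A0 B : InvB A0 B -> mu B <= 2 * length (Uset A0).
Proof. destruct B as [|[G D] H]; simpl; [contradiction|]. intros [aw [an I]]; eapply mu_bound; eauto. Qed.

Lemma acc_aux A0 n : forall B, InvB A0 B -> 2 * length (Uset A0) - mu B <= n ->
  Acc (fun B' B => extends B' B) B.
Proof.
  induction n as [|n IH]; intros B I Hn; constructor; intros B' [S' [-> Hs]];
    destruct (sstep_inv A0 B S' I Hs) as [I' Hm]; pose proof (InvB_bound _ _ I');
    [lia|]. apply IH; auto. lia.
Qed.

Theorem part1 A0 x0 : Acc (fun B' B => extends B' B) [root x0 A0].
Proof. eapply acc_aux; [apply root_inv|apply le_n]. Qed.

Lemma branch_inv A0 x0 B : branch (root x0 A0) B -> InvB A0 B.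
Proof.
  induction 1; [apply root_inv|]. apply (sstep_inv A0 B S'); auto.
Qed.

Lemma app_nonempty H S r P : Defs.app H S r P -> exists S', In S' P.
Proof.
  intros [Q [Hr HF]]. destruct Hr; inversion HF; subst; eexists; simpl; eauto.
Qed.

Lemma any_step H S r P : ~ initial S -> Defs.app H S r P -> exists S', sstep (S :: H) S'.
Proof.
  intros Ni Ha.
  destruct (classic (exists r', ~ dynamic r' /\ r' <> RLcnd /\ applicable H S r')) as [[r' [Hd [Hl [P' Ha']]]]|N1].
  { destruct (app_nonempty _ _ _ _ Ha') as [S' HS']. exists S'; split; auto.
    exists r', P'; split; auto; split; auto.
    destruct r'; simpl; auto; exfalso; (apply Hd; unfold dynamic; auto; fail) || congruence. }
  destruct (classic (applicable H S RRcnd)) as [[P' Ha']|N2].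
  { destruct (app_nonempty _ _ _ _ Ha') as [S' HS']. exists S'; split; auto.
    exists RRcnd, P'; split; auto; split; auto. simpl. intros r' Hd Hl Hap. apply N1; eauto. }
  destruct (classic (applicable H S RLcnd)) as [[P' Ha']|N3].
  { destruct (app_nonempty _ _ _ _ Ha') as [S' HS']. exists S'; split; auto.
    exists RLcnd, P'; split; auto. }
  destruct (app_nonempty _ _ _ _ Ha) as [S' HS']. exists S'; split; auto.
  exists r, P; split; auto; split; auto.
  assert (Hrest : forall r', ~ dynamic r' -> ~ applicable H S r').
  { intros r' Hd Hap. destruct (classic (r' = RLcnd)) as [->|Hl]; [apply N3; auto|apply N1; eauto]. }
  destruct r; simpl; try exact I; try exact Hrest; try exact N2; exfalso; apply N2; exists P; exact Ha.
Qed.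

Lemma in_perm (G : list lform) p : In p G -> exists ctx, Permutation G (p :: ctx).
Proof.
  intros Hp. apply in_split in Hp as [l1 [l2 ->]]. exists (l1 ++ l2).
  apply Permutation_sym, Permutation_middle.
Qed.

Lemma le_list_max x l : In x l -> x <= list_max l.
Proof.
  intros Hx. pose proof (proj1 (list_max_le l (list_max l)) (le_n _)) as HF.
  rewrite Forall_forall in HF; auto.
Qed.

Lemma freshW G D : exists x, ~ occW x G D.
Proof.
  exists (S (list_max (flat_map wlabs (G ++ D)))). intros [f [Hf Hx]].
  assert (In (S (list_max (flat_map wlabs (G ++ D)))) (flat_map wlabs (G ++ D))).
  { apply in_flat_map. exists f; split; auto. apply in_app_iff; auto. }
  apply le_list_max in H; lia.
Qed.

Lemma freshN G D : exists x, ~ occN x G D.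
Proof.
  exists (S (list_max (flat_map nlabs (G ++ D)))). intros [f [Hf Hx]].
  assert (In (S (list_max (flat_map nlabs (G ++ D)))) (flat_map nlabs (G ++ D))).
  { apply in_flat_map. exists f; split; auto. apply in_app_iff; auto. }
  apply le_list_max in H; lia.
Qed.

Lemma sat A0 G D H aw an : InvW A0 G D H aw an -> ~ initial (G,D) ->
  (forall r Q, ~ rapp H G D r Q) -> saturated H G D.
Proof.
  intros I Ni nr. unfold saturated.
  split; [intro Hx; apply Ni; left; exact Hx|].
  split; [intro Hx; apply Ni; right; exact Hx|].
  split.
  { intros x A B Hd. apply NNPP; intro Hn. destruct (i_SIL _ _ _ _ _ _ I _ Hd) as [Hg|Hs]; [|exact (Hn Hs)].
    destruct (in_perm _ _ Hg) as [ctx Hp]. eapply (nr RLand). eapply ap_Land; [exact Hp|].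
    intro Hs; apply Hn; apply Hs; exact Hd. }
  split.
  { intros x A B Hd. apply NNPP; intro Hn. destruct (i_SIR _ _ _ _ _ _ I _ Hd) as [Hg|Hs]; [|exact (Hn Hs)].
    destruct (in_perm _ _ Hg) as [ctx Hp]. eapply (nr RRand). eapply ap_Rand; [exact Hp|].
    intro Hs; apply Hn; apply Hs; exact Hd. }
  split.
  { intros x A B Hd. apply NNPP; intro Hn. destruct (i_SIL _ _ _ _ _ _ I _ Hd) as [Hg|Hs]; [|exact (Hn Hs)].
    destruct (in_perm _ _ Hg) as [ctx Hp]. eapply (nr RLor). eapply ap_Lor; [exact Hp|].
    intro Hs; apply Hn; apply Hs; exact Hd. }
  split.
  { intros x A B Hd. apply NNPP; intro Hn. destruct (i_SIR _ _ _ _ _ _ I _ Hd) as [Hg|Hs]; [|exact (Hn Hs)].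
    destruct (in_perm _ _ Hg) as [ctx Hp]. eapply (nr RRor). eapply ap_Ror; [exact Hp|].
    intro Hs; apply Hn; apply Hs; exact Hd. }
  split.
  { intros x A B Hd. apply NNPP; intro Hn. destruct (i_SIL _ _ _ _ _ _ I _ Hd) as [Hg|Hs]; [|exact (Hn Hs)].
    destruct (in_perm _ _ Hg) as [ctx Hp]. eapply (nr RLimp). eapply ap_Limp; [exact Hp|].
    intro Hs; apply Hn; apply Hs; exact Hd. }
  split.
  { intros x A B Hd. apply NNPP; intro Hn.
    destruct (in_perm _ _ Hd) as [ctx Hp]. eapply (nr RRimp). eapply ap_Rimp; [exact Hp|].
    intro Hs; apply Hn; apply Hs; exact Hd. }
  split.
  { intros a Hd. apply NNPP; intro Hn. eapply (nr RRef). eapply ap_Ref.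
    intro Hs; apply Hn; apply Hs; exact Hd. }
  split.
  { intros a b c H1 H2. apply NNPP; intro Hn. eapply (nr RTr). eapply ap_Tr; [exact H1|exact H2|];
    try (intro Hs; apply Hn; apply Hs; auto). }
  split.
  { intros x a b H1 H2. apply NNPP; intro Hn. eapply (nr RLsub). eapply ap_Lsub; [exact H1|exact H2|];
    try (intro Hs; apply Hn; apply Hs; auto). }
  split.
  { intros x a A H1 H2. apply NNPP; intro Hn. eapply (nr RLall). eapply ap_Lall; [exact H1|exact H2|];
    try (intro Hs; apply Hn; apply Hs; auto). }
  split.
  { intros a A Hd. apply NNPP; intro Hn. destruct (i_SIR _ _ _ _ _ _ I _ Hd) as [Hg|Hs]; [|exact (Hn Hs)].
    destruct (in_perm _ _ Hg) as [ctx Hp]. destruct (freshW G D) as [x Fx].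
    eapply (nr RRall). eapply ap_Rall; [exact Hp|exact Fx|].
    intro Hs; apply Hn; apply Hs; exact Hd. }
  split.
  { intros a A Hd. apply NNPP; intro Hn. destruct (i_SIL _ _ _ _ _ _ I _ Hd) as [Hg|Hs]; [|exact (Hn Hs)].
    destruct (in_perm _ _ Hg) as [ctx Hp]. destruct (freshW G D) as [x Fx].
    eapply (nr RLex). eapply ap_Lex; [exact Hp|exact Fx|].
    intro Hs; apply Hn; apply Hs; exact Hd. }
  split.
  { intros x a A H1 H2. apply NNPP; intro Hn. eapply (nr RRex). eapply ap_Rex; [exact H1|exact H2|];
    try (intro Hs; apply Hn; apply Hs; auto). }
  split.
  { intros x A B Hd. apply NNPP; intro Hn. destruct (i_SIR _ _ _ _ _ _ I _ Hd) as [Hg|Hs]; [|exact (Hn Hs)].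
    destruct (in_perm _ _ Hg) as [ctx Hp]. destruct (freshN G D) as [a Fa].
    eapply (nr RRcnd). eapply ap_Rcnd; [exact Hp|exact Fa|].
    intro Hs; apply Hn; apply Hs; exact Hd. }
  split.
  { intros a x A B H1 H2. apply NNPP; intro Hn. eapply (nr RLcnd). eapply ap_Lcnd; [exact H1|exact H2|];
    try (intro Hs; apply Hn; apply Hs; auto). }
  split.
  { intros c x a A B H1 H2 H3. apply NNPP; intro Hn. eapply (nr RRbar). eapply ap_Rbar; [exact H1|exact H2|exact H3|];
    try (intro Hs; apply Hn; apply Hs; auto). }
  split.
  { intros x a A B Hd. apply NNPP; intro Hn. destruct (i_SIL _ _ _ _ _ _ I _ Hd) as [Hg|Hs]; [|exact (Hn Hs)].
    destruct (in_perm _ _ Hg) as [ctx Hp]. destruct (freshN G D) as [c Fc].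
    eapply (nr RLbar). eapply ap_Lbar; [exact Hp|exact Fc|].
    intro Hs; apply Hn; apply Hs; exact Hd. }
  { intros b a A H1 H2. apply NNPP; intro Hn. eapply (nr RMon). eapply ap_Mon; [exact H1|exact H2|];
    try (intro Hs; apply Hn; apply Hs; auto). }
Qed.

Theorem part2 A0 x0 : forall B, branch (root x0 A0) B -> (forall S', ~ sstep B S') ->
     (exists S H, B = S :: H /\ initial S) \/ branch_saturated B.
Proof.
  intros B Hb Hst. pose proof (branch_inv _ _ _ Hb) as IB.
  destruct B as [|[G D] H]; [contradiction|].
  destruct (classic (initial (G,D))) as [Hi|Ni]; [left; exists (G,D), H; auto|right].
  destruct IB as [aw [an I]]. simpl. eapply sat; eauto.
  intros r Q Hr. destruct (any_step H (G,D) r Q Ni) as [S' Hs].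
  - exists Q; split; [exact Hr|apply Forall2_sp_refl].
  - eapply Hst; eauto.
Qed.

Theorem mainTheorem16 (A0 : formula) (x0 : wlabel) :
  Acc (fun B' B => extends B' B) [root x0 A0] /\
  (forall B, branch (root x0 A0) B -> (forall S', ~ sstep B S') ->
     (exists S H, B = S :: H /\ initial S) \/ branch_saturated B).
Proof. split; [apply part1|apply part2]. Qed.
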